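(* Fix $\Lambda_0,\dots,\Lambda_{N-1}\ge0$ with a unique minimizer $j_\star$ ($\Lambda_j>\Lambda_{j_\star}$ for $j\ne j_\star$), fix $\boldsymbol\Gamma^{(1)}$ irreducible, and for $\theta>0$ let $-\mu(\theta)$ be the largest eigenvalue of $\theta\boldsymbol\Theta^{(1)}-\boldsymbol\Psi$ and $-\lambda(\theta)$ the largest eigenvalue of $\theta\boldsymbol\Gamma^{(1)}-\mathrm{diag}(\Lambda_j)$. Then as $\theta\to0$, $$\mu(\theta)=2\Lambda_{j_\star}+2\theta\sum_{j\neq j_\star}\Gamma^{(1)}_{jj_\star}-4\theta^2\sum_{j\neq j_\star}\frac{(\Gamma^{(1)}_{jj_\star})^2}{\Lambda_j-\Lambda_{j_\star}}+O(\theta^3),$$ the corresponding unit eigenvector is $\mathbf W^{(0)}+\theta\mathbf W^{(1)}+O(\theta^2)$ with $W^{(0)}_{jl}=\delta_{jj_\star}\delta_{lj_\star}$, $W^{(1)}_{j_\star l}=2\Gamma^{(1)}_{j_\star l}/(\Lambda_l-\Lambda_{j_\star})$ for $l>j_\star$, $W^{(1)}_{jj_\star}=2\Gamma^{(1)}_{jj_\star}/(\Lambda_j-\Lambda_{j_\star})$ for $j<j_\star$, and $W^{(1)}_{jl}=0$ otherwise; and $$\mu(\theta)-2\lambda(\theta)=-2\theta^2\sum_{j\neq j_\star}\frac{(\Gamma^{(1)}_{jj_\star})^2}{\Lambda_j-\Lambda_{j_\star}}+O(\theta^3),$$ which is negative for $\theta$ small enough.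
   Context: Let $N\ge 2$. Let $\boldsymbol\Gamma^{(1)}=(\Gamma^{(1)}_{jl})_{j,l=0}^{N-1}$ be a real symmetric matrix with $\Gamma^{(1)}_{jl}\ge 0$ for $j\neq l$ and $\Gamma^{(1)}_{jj}=-\sum_{l\neq j}\Gamma^{(1)}_{jl}$; it is called irreducible if the graph on $\{0,\dots,N-1\}$ with an edge between $j\neq l$ whenever $\Gamma^{(1)}_{jl}>0$ is connected. Let $\mathcal T_N=\{(j,l)\in\mathbb N^2:0\le j\le l\le N-1\}$; for $\mathbf S\in\mathbb R^{\mathcal T_N}$, $S_{jl}$ with $j>l$ means $S_{lj}$. Define $(\boldsymbol\Psi\mathbf S)_{jl}=(\Lambda_j+\Lambda_l)S_{jl}$ and $(\boldsymbol\Theta^{(1)}\mathbf S)_{jl}=2\Gamma^{(1)}_{jl}\mathbf 1_{j\neq l}(S_{jj}+S_{ll}-2S_{jl})+\sum_{n\notin\{j,l\}}[\Gamma^{(1)}_{ln}(S_{jn}-S_{jl})+\Gamma^{(1)}_{jn}(S_{nl}-S_{jl})]$. *)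

(* Defs.v *)
From Stdlib Require Import Reals Lra Arith Bool.
Open Scope R_scope.

Fixpoint sumN (n : nat) (f : nat -> R) : R :=
  match n with
  | O => 0
  | S m => sumN m f + f m
  end.

(* Vectors in R^{T_N} are represented as S : nat -> nat -> R, of which only the
   entries S j l with j <= l < N matter; symm S j l reads S_{jl} with the
   convention S_{jl} = S_{lj} for j > l. *)
Definition symm (S : nat -> nat -> R) (j l : nat) : R :=
  if Nat.leb j l then S j l else S l j.

Definition sumT (N : nat) (f : nat -> nat -> R) : R :=
  sumN N (fun j => sumN N (fun l => if Nat.leb j l then f j l else 0)).

Definition normT (N : nat) (S : nat -> nat -> R) : R :=
  sqrt (sumT N (fun j l => (S j l) ^ 2)).

Definition gamma_ok (N : nat) (G : nat -> nat -> R) : Prop :=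
  (forall j l, (j < N)%nat -> (l < N)%nat -> G j l = G l j) /\
  (forall j l, (j < N)%nat -> (l < N)%nat -> j <> l -> 0 <= G j l) /\
  (forall j, (j < N)%nat ->
     G j j = - sumN N (fun l => if Nat.eqb l j then 0 else G j l)).

Inductive reach (N : nat) (G : nat -> nat -> R) (j : nat) : nat -> Prop :=
  | reach_refl : reach N G j j
  | reach_step : forall m l, reach N G j m -> (m < N)%nat -> (l < N)%nat ->
      m <> l -> 0 < G m l -> reach N G j l.

Definition irreducible (N : nat) (G : nat -> nat -> R) : Prop :=
  forall j l, (j < N)%nat -> (l < N)%nat -> reach N G j l.

Definition PsiOp (Lam : nat -> R) (S : nat -> nat -> R) (j l : nat) : R :=
  (Lam j + Lam l) * symm S j l.

Definition ThetaOp (N : nat) (G : nat -> nat -> R) (S : nat -> nat -> R)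
  (j l : nat) : R :=
  2 * G j l * (if Nat.eqb j l then 0 else 1)
    * (symm S j j + symm S l l - 2 * symm S j l)
  + sumN N (fun n =>
      if orb (Nat.eqb n j) (Nat.eqb n l) then 0
      else G l n * (symm S j n - symm S j l) + G j n * (symm S n l - symm S j l)).

Definition opT (N : nat) (G : nat -> nat -> R) (Lam : nat -> R) (theta : R)
  (S : nat -> nat -> R) (j l : nat) : R :=
  theta * ThetaOp N G S j l - PsiOp Lam S j l.

Definition is_eigvecT (N : nat) (A : (nat -> nat -> R) -> nat -> nat -> R)
  (nu : R) (S : nat -> nat -> R) : Prop :=
  (exists j l, (j <= l)%nat /\ (l < N)%nat /\ S j l <> 0) /\
  (forall j l, (j <= l)%nat -> (l < N)%nat -> A S j l = nu * S j l).

Definition is_eigT N A nu : Prop := exists S, is_eigvecT N A nu S.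

Definition is_eigN (N : nat) (G : nat -> nat -> R) (Lam : nat -> R) (theta nu : R)
  : Prop :=
  exists v : nat -> R,
    (exists j, (j < N)%nat /\ v j <> 0) /\
    (forall j, (j < N)%nat ->
       theta * sumN N (fun l => G j l * v l) - Lam j * v j = nu * v j).

Definition is_largest (P : R -> Prop) (nu : R) : Prop :=
  P nu /\ forall nu', P nu' -> nu' <= nu.

Definition W0 (js : nat) (j l : nat) : R :=
  if andb (Nat.eqb j js) (Nat.eqb l js) then 1 else 0.

Definition W1 (G : nat -> nat -> R) (Lam : nat -> R) (js : nat) (j l : nat) : R :=
  if andb (Nat.eqb j js) (Nat.ltb js l) then 2 * G js l / (Lam l - Lam js)
  else if andb (Nat.eqb l js) (Nat.ltb j js) then 2 * G j js / (Lam j - Lam js)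
  else 0.

Definition sumG (N : nat) (G : nat -> nat -> R) (js : nat) : R :=
  sumN N (fun j => if Nat.eqb j js then 0 else G j js).

Definition sumH (N : nat) (G : nat -> nat -> R) (Lam : nat -> R) (js : nat) : R :=
  sumN N (fun j => if Nat.eqb j js then 0 else (G j js) ^ 2 / (Lam j - Lam js)).

(* Main.v *)
Require Import Defs.
From Stdlib Require Import Reals.
From Stdlib Require Import Lra Lia Classical.
Open Scope R_scope.

Fixpoint prodN (n : nat) (f : nat -> R) : R :=
  match n with
  | O => 1
  | S m => prodN m f * f m
  end.

Lemma sumN_ext n f g : (forall k, (k < n)%nat -> f k = g k) -> sumN n f = sumN n g.
Proof.
  induction n; intros H; simpl; auto.
  rewrite IHn by (intros; apply H; lia). rewrite (H n) by lia. reflexivity.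
Qed.

Lemma sumN_plus n f g : sumN n (fun k => f k + g k) = sumN n f + sumN n g.
Proof. induction n; simpl; [lra|rewrite IHn; lra]. Qed.

Lemma sumN_scal n c f : sumN n (fun k => c * f k) = c * sumN n f.
Proof. induction n; simpl; [lra|rewrite IHn; lra]. Qed.

Lemma sumN_zero n f : (forall k, (k < n)%nat -> f k = 0) -> sumN n f = 0.
Proof.
  intros H. transitivity (sumN n (fun _ => 0)).
  - apply sumN_ext; auto.
  - induction n; simpl; [lra|rewrite IHn; [lra|intros; apply H; lia]].
Qed.

Lemma sumN_abs_le n f c : (forall k, (k < n)%nat -> Rabs (f k) <= c) ->
  Rabs (sumN n f) <= INR n * c.
Proof.
  induction n; intros H; cbn [sumN].
  - rewrite Rabs_R0; simpl; lra.
  - rewrite S_INR. eapply Rle_trans; [apply Rabs_triang|].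
    assert (h1 := IHn ltac:(intros; apply H; lia)). assert (h2 := H n ltac:(lia)). lra.
Qed.

Lemma sumN_nonneg n f : (forall k, (k < n)%nat -> 0 <= f k) -> 0 <= sumN n f.
Proof.
  induction n; intros H; simpl; [lra|].
  assert (h1 := IHn ltac:(intros; apply H; lia)). assert (h2 := H n ltac:(lia)). lra.
Qed.

Lemma sumN_le n f g : (forall k, (k < n)%nat -> f k <= g k) -> sumN n f <= sumN n g.
Proof.
  induction n; intros H; simpl; [lra|].
  assert (h1 := IHn ltac:(intros; apply H; lia)). assert (h2 := H n ltac:(lia)). lra.
Qed.

Lemma sumN_ge_term n f k0 : (forall k, (k < n)%nat -> 0 <= f k) -> (k0 < n)%nat ->
  f k0 <= sumN n f.
Proof.
  induction n; intros H Hk; simpl; [lia|].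
  destruct (Nat.eq_dec k0 n) as [->|ne].
  - assert (h := sumN_nonneg n f ltac:(intros; apply H; lia)). lra.
  - assert (h1 := IHn ltac:(intros; apply H; lia) ltac:(lia)). assert (h2 := H n ltac:(lia)). lra.
Qed.

Lemma sumN_delta n p f : (p < n)%nat ->
  sumN n (fun k => if Nat.eqb k p then f k else 0) = f p.
Proof.
  induction n; intros Hp; simpl; [lia|].
  destruct (Nat.eq_dec p n) as [->|ne].
  - rewrite Nat.eqb_refl. rewrite sumN_zero; [lra|].
    intros k Hk. destruct (Nat.eqb_spec k n); [lia|auto].
  - rewrite IHn by lia. destruct (Nat.eqb_spec n p); [lia|lra].
Qed.

Lemma sumN_split n f k0 : (k0 < n)%nat ->
  sumN n f = f k0 + sumN n (fun k => if Nat.eqb k k0 then 0 else f k).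
Proof.
  intros Hk.
  rewrite <- (sumN_delta n k0 f Hk), <- sumN_plus. apply sumN_ext.
  intros k _. destruct (Nat.eqb k k0); lra.
Qed.

Lemma prodN_pos n f : (forall k, (k < n)%nat -> 0 < f k) -> 0 < prodN n f.
Proof.
  induction n; intros H; simpl; [lra|].
  apply Rmult_lt_0_compat; [apply IHn; intros; apply H; lia|apply H; lia].
Qed.

Lemma prodN_neg n f k0 : (k0 < n)%nat -> f k0 < 0 ->
  (forall k, (k < n)%nat -> k <> k0 -> 0 < f k) -> prodN n f < 0.
Proof.
  induction n; intros Hk Hf H; simpl; [lia|].
  destruct (Nat.eq_dec k0 n) as [->|ne].
  - assert (h := prodN_pos n f ltac:(intros; apply H; lia)). nra.
  - assert (h1 := IHn ltac:(lia) Hf ltac:(intros; apply H; lia)).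
    assert (h2 := H n ltac:(lia) ltac:(lia)). nra.
Qed.

Fixpoint maxN (n : nat) (f : nat -> R) : R :=
  match n with
  | O => 0
  | S m => Rmax (maxN m f) (f m)
  end.

Lemma maxN_ge n f k : (k < n)%nat -> f k <= maxN n f.
Proof.
  induction n; intros Hk; simpl; [lia|].
  destruct (Nat.eq_dec k n) as [->|ne]; [apply Rmax_r|].
  eapply Rle_trans; [apply IHn; lia|apply Rmax_l].
Qed.

Lemma maxN_nonneg n f : 0 <= maxN n f.
Proof. induction n; simpl; [lra|]. eapply Rle_trans; [apply IHn|apply Rmax_l]. Qed.

Lemma maxN_attained n f : (forall k, (k < n)%nat -> 0 <= f k) -> (0 < n)%nat ->
  exists k, (k < n)%nat /\ maxN n f = f k.
Proof.
  induction n; intros H Hn; [lia|]. simpl.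
  destruct n as [|n'].
  - exists 0%nat. split; [lia|]. simpl. apply Rmax_right. apply H; lia.
  - destruct (IHn ltac:(intros; apply H; lia) ltac:(lia)) as [k [Hk Hm]].
    unfold Rmax. destruct (Rle_dec (maxN (S n') f) (f (S n'))).
    + exists (S n'). split; [lia|auto].
    + exists k. split; [lia|auto].
Qed.

Lemma argmaxN n f : (0 < n)%nat ->
  exists k, (k < n)%nat /\ forall k', (k' < n)%nat -> Rabs (f k') <= Rabs (f k).
Proof.
  intros Hn. destruct (maxN_attained n (fun k => Rabs (f k)) ltac:(intros; apply Rabs_pos) Hn)
    as [k [Hk Hm]].
  exists k. split; auto. intros k' Hk'. rewrite <- Hm. apply (maxN_ge n (fun k => Rabs (f k))); auto.
Qed.

Lemma argmaxT N (S : nat -> nat -> R) :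
  (exists j l, (j <= l)%nat /\ (l < N)%nat /\ S j l <> 0) ->
  exists j l, (j <= l)%nat /\ (l < N)%nat /\
    forall j' l', (j' <= l')%nat -> (l' < N)%nat -> Rabs (S j' l') <= Rabs (S j l).
Proof.
  intros [j0 [l0 [H1 [H2 H3]]]].
  set (h := fun j l => if Nat.leb j l then Rabs (S j l) else 0).
  assert (hnn : forall j l, 0 <= h j l).
  { intros j l. unfold h. destruct (Nat.leb j l); [apply Rabs_pos|lra]. }
  destruct (maxN_attained N (fun j => maxN N (h j)) ltac:(intros; apply maxN_nonneg) ltac:(lia))
    as [j [Hj Hmj]].
  destruct (maxN_attained N (h j) ltac:(intros; apply hnn) ltac:(lia)) as [l [Hl Hml]].
  assert (Hall : forall j' l', (j' < N)%nat -> (l' < N)%nat -> h j' l' <= h j l).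
  { intros j' l' Hj' Hl'. rewrite <- Hml, <- Hmj.
    eapply Rle_trans; [apply (maxN_ge N (h j')); auto|].
    apply (maxN_ge N (fun j => maxN N (h j))); auto. }
  destruct (Nat.leb_spec j l) as [hjl|hjl].
  - exists j, l. split; [auto|split; [auto|]].
    intros j' l' Hj' Hl'. assert (hh := Hall j' l' ltac:(lia) Hl').
    unfold h in hh. rewrite (proj2 (Nat.leb_le j' l') Hj') in hh.
    rewrite (proj2 (Nat.leb_le j l) hjl) in hh. auto.
  - exfalso. assert (hh := Hall j0 l0 ltac:(lia) H2). unfold h in hh.
    rewrite (proj2 (Nat.leb_le j0 l0) H1) in hh.
    replace (Nat.leb j l) with false in hh by (symmetry; apply Nat.leb_gt; lia).
    assert (Rabs (S j0 l0) > 0) by (apply Rabs_pos_lt; auto). lra.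
Qed.


Lemma symm_le S j l : (j <= l)%nat -> symm S j l = S j l.
Proof. intros H. unfold symm. rewrite (proj2 (Nat.leb_le j l) H). auto. Qed.

Lemma symm_comm S j l : symm S j l = symm S l j.
Proof.
  unfold symm. destruct (Nat.leb_spec j l); destruct (Nat.leb_spec l j); auto.
  - replace l with j by lia. auto.
  - lia.
Qed.

Lemma symm_bound N S m a b : (forall j l, (j <= l)%nat -> (l < N)%nat -> Rabs (S j l) <= m) ->
  (a < N)%nat -> (b < N)%nat -> Rabs (symm S a b) <= m.
Proof.
  intros H Ha Hb. unfold symm. destruct (Nat.leb_spec a b); apply H; lia.
Qed.

Lemma ThetaOp_ext N G X Y j l :
  (forall a b, (a < N)%nat -> (b < N)%nat -> X a b = Y a b) ->
  (j < N)%nat -> (l < N)%nat -> ThetaOp N G X j l = ThetaOp N G Y j l.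
Proof.
  intros H Hj Hl.
  assert (Hs : forall a b, (a < N)%nat -> (b < N)%nat -> symm X a b = symm Y a b).
  { intros a b Ha Hb. unfold symm. destruct (Nat.leb a b); apply H; auto. }
  unfold ThetaOp. rewrite !Hs by auto. f_equal. apply sumN_ext. intros n Hn.
  rewrite !Hs by auto. reflexivity.
Qed.

Lemma ThetaOp_lin N G X Y c j l :
  ThetaOp N G (fun a b => X a b + c * Y a b) j l = ThetaOp N G X j l + c * ThetaOp N G Y j l.
Proof.
  assert (Hs : forall a b, symm (fun a b => X a b + c * Y a b) a b = symm X a b + c * symm Y a b).
  { intros a b. unfold symm. destruct (Nat.leb a b); auto. }
  unfold ThetaOp. rewrite !Hs.
  rewrite (sumN_ext N _ (fun n => (if orb (Nat.eqb n j) (Nat.eqb n l) then 0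
      else G l n * (symm X j n - symm X j l) + G j n * (symm X n l - symm X j l))
     + c * (if orb (Nat.eqb n j) (Nat.eqb n l) then 0
      else G l n * (symm Y j n - symm Y j l) + G j n * (symm Y n l - symm Y j l)))).
  - rewrite sumN_plus, sumN_scal. ring.
  - intros n _. rewrite !Hs. destruct (orb (Nat.eqb n j) (Nat.eqb n l)); ring.
Qed.

Lemma ThetaOp_zero N G j l : ThetaOp N G (fun _ _ => 0) j l = 0.
Proof.
  unfold ThetaOp, symm. rewrite sumN_zero.
  - destruct (Nat.leb j l), (Nat.leb j j), (Nat.leb l l); ring.
  - intros n _. destruct (orb (Nat.eqb n j) (Nat.eqb n l)); [auto|].
    destruct (Nat.leb j n), (Nat.leb n l), (Nat.leb j l); ring.
Qed.

Lemma ThetaOp_sum N G n (v : nat -> R) (F : nat -> nat -> nat -> R) j l :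
  ThetaOp N G (fun a b => sumN n (fun k => v k * F k a b)) j l =
  sumN n (fun k => v k * ThetaOp N G (F k) j l).
Proof.
  induction n.
  - simpl. apply ThetaOp_zero.
  - change (ThetaOp N G (fun a b => sumN n (fun k => v k * F k a b) + v n * F n a b) j l =
      sumN n (fun k => v k * ThetaOp N G (F k) j l) + v n * ThetaOp N G (F n) j l).
    rewrite ThetaOp_lin, IHn. reflexivity.
Qed.

Lemma ThetaOp_scal N G X c j l (Hj : (j < N)%nat) (Hl : (l < N)%nat) :
  ThetaOp N G (fun a b => c * X a b) j l = c * ThetaOp N G X j l.
Proof.
  rewrite (ThetaOp_ext N G _ (fun a b => 0 + c * X a b)) by (auto; intros; ring).
  rewrite ThetaOp_lin, ThetaOp_zero. ring.
Qed.

Lemma ThetaOp_bound N G X m gm j l :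
  (forall a b, (a < N)%nat -> (b < N)%nat -> Rabs (G a b) <= gm) ->
  (forall a b, (a <= b)%nat -> (b < N)%nat -> Rabs (X a b) <= m) ->
  (j < N)%nat -> (l < N)%nat ->
  Rabs (ThetaOp N G X j l) <= (8 + 4 * INR N) * gm * m.
Proof.
  intros HG HX Hj Hl.
  assert (Hm : 0 <= m) by (eapply Rle_trans; [apply Rabs_pos|apply (HX l l); lia]).
  assert (Hgm : 0 <= gm) by (eapply Rle_trans; [apply Rabs_pos|apply (HG l l); auto]).
  assert (Hs : forall a b, (a < N)%nat -> (b < N)%nat -> Rabs (symm X a b) <= m)
    by (intros; eapply symm_bound; eauto).
  unfold ThetaOp.
  assert (h1 : Rabs (2 * G j l * (if Nat.eqb j l then 0 else 1) *
      (symm X j j + symm X l l - 2 * symm X j l)) <= 8 * gm * m).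
  { assert (hg := HG j l Hj Hl). assert (a1 := Hs j j Hj Hj). assert (a2 := Hs l l Hl Hl).
    assert (a3 := Hs j l Hj Hl).
    assert (hx : Rabs (symm X j j + symm X l l - 2 * symm X j l) <= 4 * m).
    { unfold Rminus. eapply Rle_trans; [apply Rabs_triang|].
      rewrite Rabs_Ropp, Rabs_mult, (Rabs_right 2) by lra.
      eapply Rle_trans; [apply Rplus_le_compat_r; apply Rabs_triang|]. lra. }
    rewrite !Rabs_mult, (Rabs_right 2) by lra.
    assert (hc : Rabs (if Nat.eqb j l then 0 else 1) <= 1).
    { destruct (Nat.eqb j l); [rewrite Rabs_R0|rewrite Rabs_R1]; lra. }
    assert (0 <= Rabs (G j l)) by apply Rabs_pos.
    assert (0 <= Rabs (if Nat.eqb j l then 0 else 1)) by apply Rabs_pos.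
    assert (Rabs (G j l) * Rabs (if Nat.eqb j l then 0 else 1) <= gm) by nra.
    assert (0 <= Rabs (G j l) * Rabs (if Nat.eqb j l then 0 else 1)) by nra.
    nra. }
  assert (h2 : Rabs (sumN N (fun n => if orb (Nat.eqb n j) (Nat.eqb n l) then 0
      else G l n * (symm X j n - symm X j l) + G j n * (symm X n l - symm X j l)))
      <= INR N * (4 * gm * m)).
  { apply sumN_abs_le. intros n Hn. destruct (orb (Nat.eqb n j) (Nat.eqb n l)).
    - rewrite Rabs_R0. nra.
    - assert (g1 := HG l n Hl Hn). assert (g2 := HG j n Hj Hn).
      assert (b1 := Hs j n Hj Hn). assert (b2 := Hs j l Hj Hl). assert (b3 := Hs n l Hn Hl).
      assert (e1 : Rabs (symm X j n - symm X j l) <= 2 * m).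
      { unfold Rminus. eapply Rle_trans; [apply Rabs_triang|]. rewrite Rabs_Ropp. lra. }
      assert (e2 : Rabs (symm X n l - symm X j l) <= 2 * m).
      { unfold Rminus. eapply Rle_trans; [apply Rabs_triang|]. rewrite Rabs_Ropp. lra. }
      eapply Rle_trans; [apply Rabs_triang|]. rewrite !Rabs_mult.
      assert (0 <= Rabs (G l n)) by apply Rabs_pos. assert (0 <= Rabs (G j n)) by apply Rabs_pos.
      assert (0 <= Rabs (symm X j n - symm X j l)) by apply Rabs_pos.
      assert (0 <= Rabs (symm X n l - symm X j l)) by apply Rabs_pos.
      assert (Rabs (G l n) * Rabs (symm X j n - symm X j l) <= gm * (2 * m)) by
        (apply Rmult_le_compat; auto).
      assert (Rabs (G j n) * Rabs (symm X n l - symm X j l) <= gm * (2 * m)) by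
        (apply Rmult_le_compat; auto).
      lra. }
  eapply Rle_trans; [apply Rabs_triang|]. lra.
Qed.


Lemma ThetaOp_00 N G X js :
  ThetaOp N G X js js =
  2 * sumN N (fun n => if Nat.eqb n js then 0 else G js n * (symm X js n - symm X js js)).
Proof.
  unfold ThetaOp. rewrite Nat.eqb_refl.
  rewrite <- sumN_scal.
  replace (2 * G js js * 0 * (symm X js js + symm X js js - 2 * symm X js js)) with 0 by ring.
  rewrite Rplus_0_l. apply sumN_ext. intros n _. rewrite Bool.orb_diag.
  destruct (Nat.eqb n js); [ring|]. rewrite (symm_comm X n js). ring.
Qed.

Lemma symm_W0 js a b : symm (W0 js) a b = W0 js a b.
Proof.
  unfold symm, W0. destruct (Nat.leb a b); auto.
  destruct (Nat.eqb a js), (Nat.eqb b js); auto.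
Qed.

Lemma ThetaOp_e0 N G Lam js j l :
  (forall a, (a < N)%nat -> a <> js -> Lam a - Lam js <> 0) ->
  (j <= l)%nat -> (l < N)%nat -> ~ (j = js /\ l = js) ->
  ThetaOp N G (W0 js) j l = (Lam j + Lam l - 2 * Lam js) * W1 G Lam js j l.
Proof.
  intros HL Hjl Hl Hne. unfold ThetaOp. rewrite !symm_W0.
  assert (Hsum : forall j l, (j <> js \/ l <> js) ->
    sumN N (fun n => if orb (Nat.eqb n j) (Nat.eqb n l) then 0
      else G l n * (symm (W0 js) j n - W0 js j l) + G j n * (symm (W0 js) n l - W0 js j l)) = 0).
  { intros a b Hab. apply sumN_zero. intros n _. rewrite !symm_W0. unfold W0.
    destruct (Nat.eqb_spec n a); destruct (Nat.eqb_spec n b); simpl; try reflexivity.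
    destruct (Nat.eqb_spec a js); destruct (Nat.eqb_spec b js); destruct (Nat.eqb_spec n js);
      simpl; try ring; lia. }
  rewrite Hsum by lia. unfold W1, W0.
  destruct (Nat.eqb_spec j js) as [->|hj].
  - assert (hl : l <> js) by lia.
    rewrite (proj2 (Nat.ltb_lt js l)) by lia.
    destruct (Nat.eqb_spec js l); [lia|]. destruct (Nat.eqb_spec l js); [lia|].
    simpl. field. apply HL; auto.
  - destruct (Nat.eqb_spec l js) as [->|hl].
    + rewrite (proj2 (Nat.ltb_lt j js)) by lia.
      destruct (Nat.eqb_spec j js); [lia|]. simpl. field. apply HL; auto; lia.
    + destruct (Nat.eqb_spec j js); [lia|]. destruct (Nat.eqb_spec l js); [lia|].
      simpl. destruct (Nat.eqb j l); simpl; ring.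
Qed.


Lemma abs_le_inv x a : Rabs x <= a -> - a <= x <= a.
Proof. unfold Rabs; destruct (Rcase_abs x); intros; lra. Qed.

Definition Bc (N : nat) (gm : R) : R := (8 + 4 * INR N) * gm + 1.

Set Default Proof Using "All".
Section ThetaAn.
Variables (N : nat) (G : nat -> nat -> R) (Lam : nat -> R) (js : nat) (g gm : R).
Hypothesis Hjs : (js < N)%nat.
Hypothesis Hg : 0 < g.
Hypothesis Hgap : forall j, (j < N)%nat -> j <> js -> Lam js + g <= Lam j.
Hypothesis Hgm : forall j l, (j < N)%nat -> (l < N)%nat -> Rabs (G j l) <= gm.
Hypothesis HGs : forall j l, (j < N)%nat -> (l < N)%nat -> G j l = G l j.
Hypothesis HGd : G js js = - sumN N (fun l => if Nat.eqb l js then 0 else G js l).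

Let B := Bc N gm.

Lemma gm_nonneg : 0 <= gm.
Proof. eapply Rle_trans; [apply Rabs_pos|apply (Hgm js js); auto]. Qed.

Lemma B_pos : 0 < B.
Proof. unfold B, Bc. assert (h := pos_INR N). assert (h2 := gm_nonneg). nra. Qed.

Lemma Lam_ge a : (a < N)%nat -> Lam js <= Lam a.
Proof. intros Ha. destruct (Nat.eq_dec a js) as [->|n]; [lra|]. assert (h := Hgap a Ha n). lra. Qed.

Lemma Lam_pair a b : (a <= b)%nat -> (b < N)%nat -> ~ (a = js /\ b = js) ->
  2 * Lam js + g <= Lam a + Lam b.
Proof.
  intros Hab Hb Hn. assert (ha := Lam_ge a ltac:(lia)). assert (hb := Lam_ge b Hb).
  destruct (Nat.eq_dec a js) as [->|na].
  - assert (b <> js) by tauto. assert (h := Hgap b Hb H). lra.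
  - assert (h := Hgap a ltac:(lia) na). lra.
Qed.

Lemma Theta_boundB X m j l : (forall a b, (a <= b)%nat -> (b < N)%nat -> Rabs (X a b) <= m) ->
  (j < N)%nat -> (l < N)%nat -> Rabs (ThetaOp N G X j l) <= B * m.
Proof.
  intros HX Hj Hl. assert (Hm : 0 <= m) by (eapply Rle_trans; [apply Rabs_pos|apply (HX js js); lia]).
  eapply Rle_trans; [apply (ThetaOp_bound N G X m gm); auto|]. unfold B, Bc. nra.
Qed.

Lemma eq_at θ ν S a b : (forall a b, (a <= b)%nat -> (b < N)%nat -> opT N G Lam θ S a b = ν * S a b) ->
  (a <= b)%nat -> (b < N)%nat -> (ν + Lam a + Lam b) * S a b = θ * ThetaOp N G S a b.
Proof.
  intros H Hab Hb. assert (h := H a b Hab Hb). unfold opT, PsiOp in h. rewrite symm_le in h by auto. lra.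
Qed.

Lemma core θ ν S j l : 0 <= θ ->
  (forall a b, (a <= b)%nat -> (b < N)%nat -> opT N G Lam θ S a b = ν * S a b) ->
  (j <= l)%nat -> (l < N)%nat ->
  (forall a b, (a <= b)%nat -> (b < N)%nat -> Rabs (S a b) <= Rabs (S j l)) ->
  Rabs (ν + Lam j + Lam l) * Rabs (S j l) <= θ * B * Rabs (S j l).
Proof.
  intros Ht H Hjl Hl Hmax. rewrite <- Rabs_mult, (eq_at θ ν S j l H Hjl Hl), Rabs_mult.
  rewrite (Rabs_right θ) by lra. rewrite Rmult_assoc. apply Rmult_le_compat_l; auto.
  apply Theta_boundB; auto; lia.
Qed.

Lemma kernelT θ ν S : 0 <= θ -> θ * B <= g / 4 ->
  (forall a b, (a <= b)%nat -> (b < N)%nat -> g / 2 <= Rabs (ν + Lam a + Lam b)) ->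
  (forall a b, (a <= b)%nat -> (b < N)%nat -> opT N G Lam θ S a b = ν * S a b) ->
  forall a b, (a <= b)%nat -> (b < N)%nat -> S a b = 0.
Proof.
  intros Ht HtB Hgap2 H a b Hab Hb. apply NNPP. intros Hne.
  destruct (argmaxT N S ltac:(exists a, b; auto)) as [j [l [Hjl [Hl Hmax]]]].
  assert (hc := core θ ν S j l Ht H Hjl Hl Hmax).
  assert (hp : 0 < Rabs (S j l)).
  { eapply Rlt_le_trans; [apply Rabs_pos_lt; exact Hne|apply Hmax; auto]. }
  assert (h2 := Hgap2 j l Hjl Hl). nra.
Qed.

Lemma argmax0 θ ν S : 0 <= θ -> θ * B <= g / 4 -> - 2 * Lam js - g / 2 <= ν ->
  is_eigvecT N (opT N G Lam θ) ν S ->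
  Rabs (ν + 2 * Lam js) <= θ * B /\ S js js <> 0 /\
  forall a b, (a <= b)%nat -> (b < N)%nat -> Rabs (S a b) <= Rabs (S js js).
Proof.
  intros Ht HtB Hnu [Hnz H].
  destruct (argmaxT N S Hnz) as [j [l [Hjl [Hl Hmax]]]].
  assert (hc := core θ ν S j l Ht H Hjl Hl Hmax).
  destruct Hnz as [a [b [Hab [Hb Hne]]]].
  assert (hp : 0 < Rabs (S j l)).
  { eapply Rlt_le_trans; [apply Rabs_pos_lt; exact Hne|apply Hmax; auto]. }
  assert (hle : Rabs (ν + Lam j + Lam l) <= θ * B).
  { apply Rmult_le_reg_r with (Rabs (S j l)); auto. }
  destruct (classic (j = js /\ l = js)) as [[-> ->]|hn].
  - split; [replace (ν + 2 * Lam js) with (ν + Lam js + Lam js) by ring; auto|].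
    split; auto. intros Hz. rewrite Hz, Rabs_R0 in hp. lra.
  - exfalso. assert (h := Lam_pair j l Hjl Hl hn).
    assert (Rabs (ν + Lam j + Lam l) >= ν + Lam j + Lam l) by (apply Rle_ge, RRle_abs). lra.
Qed.

Let a1 := 2 * B / g.
Let a2 := 2 * B * (a1 + B / g) / g.
Let a3 := 2 * INR N * gm * a2.

Lemma a1_nonneg : 0 <= a1.
Proof. unfold a1. assert (h := B_pos). apply Rle_mult_inv_pos; lra. Qed.

Lemma a2_nonneg : 0 <= a2.
Proof.
  unfold a2. assert (h := B_pos). assert (h1 := a1_nonneg).
  assert (0 <= B / g) by (apply Rle_mult_inv_pos; lra).
  apply Rle_mult_inv_pos; [|lra]. nra.
Qed.

Lemma sumG_alt : sumN N (fun n => if Nat.eqb n js then 0 else G js n) = sumG N G js.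
Proof.
  unfold sumG. apply sumN_ext. intros n Hn. destruct (Nat.eqb n js); auto.
Qed.

Lemma sumH_alt : sumN N (fun n => if Nat.eqb n js then 0 else G js n * symm (W1 G Lam js) js n)
  = 2 * sumH N G Lam js.
Proof.
  unfold sumH. rewrite <- sumN_scal. apply sumN_ext. intros n Hn.
  destruct (Nat.eqb_spec n js) as [e|ne]; [ring|].
  assert (h := Hgap n Hn ne). unfold symm, W1.
  destruct (Nat.leb_spec js n).
  - rewrite Nat.eqb_refl, (proj2 (Nat.ltb_lt js n)) by lia. simpl. rewrite (HGs js n) by auto.
    field. lra.
  - rewrite (proj2 (Nat.eqb_neq n js) ne), Nat.eqb_refl, (proj2 (Nat.ltb_lt n js)) by lia. simpl.
    rewrite (HGs js n) by auto. field. lra.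
Qed.

Lemma W1_bound a b : (a <= b)%nat -> (b < N)%nat -> ~ (a = js /\ b = js) ->
  Rabs (W1 G Lam js a b) <= B / g.
Proof.
  intros Hab Hb Hn.
  assert (HL : forall c, (c < N)%nat -> c <> js -> Lam c - Lam js <> 0).
  { intros c Hc Hcn. assert (h := Hgap c Hc Hcn). lra. }
  assert (he := ThetaOp_e0 N G Lam js a b HL Hab Hb Hn).
  assert (hT := Theta_boundB (W0 js) 1 a b ltac:(intros; unfold W0; destruct (andb _ _);
     [rewrite Rabs_R1|rewrite Rabs_R0]; lra) ltac:(lia) Hb).
  rewrite he, Rabs_mult, Rmult_1_r in hT.
  assert (hD := Lam_pair a b Hab Hb Hn).
  rewrite (Rabs_right (Lam a + Lam b - 2 * Lam js)) in hT by lra.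
  apply Rmult_le_reg_l with g; [lra|]. replace (g * (B / g)) with B by (field; lra).
  assert (0 <= Rabs (W1 G Lam js a b)) by apply Rabs_pos. nra.
Qed.

Section Post.
Variables (θ ν : R) (S : nat -> nat -> R).
Hypothesis Ht : 0 < θ.
Hypothesis HtB : θ * B <= g / 4.
Hypothesis H : forall a b, (a <= b)%nat -> (b < N)%nat -> opT N G Lam θ S a b = ν * S a b.
Hypothesis H1 : S js js = 1.
Hypothesis Hle1 : forall a b, (a <= b)%nat -> (b < N)%nat -> Rabs (S a b) <= 1.
Hypothesis Hdel : Rabs (ν + 2 * Lam js) <= θ * B.

Lemma post1 a b : (a <= b)%nat -> (b < N)%nat -> ~ (a = js /\ b = js) -> Rabs (S a b) <= a1 * θ.
Proof.
  intros Hab Hb Hn. assert (he := eq_at θ ν S a b H Hab Hb).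
  assert (hT := Theta_boundB S 1 a b Hle1 ltac:(lia) Hb).
  assert (hD := Lam_pair a b Hab Hb Hn).
  assert (hpos : g / 2 <= ν + Lam a + Lam b).
  { assert (h := abs_le_inv _ _ Hdel). lra. }
  assert (hx : (g / 2) * Rabs (S a b) <= θ * B).
  { apply Rle_trans with (Rabs (ν + Lam a + Lam b) * Rabs (S a b)).
    - apply Rmult_le_compat_r; [apply Rabs_pos|]. rewrite Rabs_right; lra.
    - rewrite <- Rabs_mult, he, Rabs_mult, (Rabs_right θ) by lra.
      rewrite Rmult_1_r in hT. apply Rmult_le_compat_l; lra. }
  unfold a1. apply Rmult_le_reg_l with (g / 2); [lra|].
  replace (g / 2 * (2 * B / g * θ)) with (θ * B) by (field; lra). auto.
Qed.

Lemma post2 a b : (a <= b)%nat -> (b < N)%nat -> ~ (a = js /\ b = js) ->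
  Rabs (S a b - θ * W1 G Lam js a b) <= a2 * θ ^ 2.
Proof.
  intros Hab Hb Hn.
  assert (HL : forall c, (c < N)%nat -> c <> js -> Lam c - Lam js <> 0).
  { intros c Hc Hcn. assert (h := Hgap c Hc Hcn). lra. }
  assert (he := eq_at θ ν S a b H Hab Hb).
  rewrite (ThetaOp_ext N G S (fun x y => W0 js x y + 1 * (S x y - W0 js x y))) in he
    by (auto; lia || (intros; ring)).
  rewrite ThetaOp_lin, (ThetaOp_e0 N G Lam js a b HL Hab Hb Hn) in he.
  set (R0 := ThetaOp N G (fun x y => S x y - W0 js x y) a b) in he.
  assert (hR : Rabs R0 <= B * (a1 * θ)).
  { apply Theta_boundB; [|lia|auto]. intros x y Hxy Hy. unfold W0.
    destruct (Nat.eqb_spec x js) as [->|hx]; destruct (Nat.eqb_spec y js) as [->|hy]; simpl.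
    - rewrite H1. replace (1 - 1) with 0 by ring. rewrite Rabs_R0.
      assert (h := a1_nonneg). nra.
    - rewrite Rminus_0_r. apply post1; auto; lia.
    - rewrite Rminus_0_r. apply post1; auto; lia.
    - rewrite Rminus_0_r. apply post1; auto; lia. }
  assert (hW := W1_bound a b Hab Hb Hn).
  assert (hD := Lam_pair a b Hab Hb Hn).
  set (D := Lam a + Lam b - 2 * Lam js) in *.
  set (dl := ν + 2 * Lam js) in *.
  set (w := W1 G Lam js a b) in *.
  assert (key : (D + dl) * (S a b - θ * w) = θ * R0 - dl * θ * w).
  { replace (D + dl) with (ν + Lam a + Lam b) by (unfold D, dl; ring). rewrite Rmult_minus_distr_l, he.
    unfold D, dl. ring. }
  assert (hb : Rabs (θ * R0 - dl * θ * w) <= θ ^ 2 * (B * (a1 + B / g))).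
  { unfold Rminus. eapply Rle_trans; [apply Rabs_triang|]. rewrite Rabs_Ropp, !Rabs_mult.
    rewrite (Rabs_right θ) by lra.
    assert (h1 : θ * Rabs R0 <= θ * (B * (a1 * θ))) by (apply Rmult_le_compat_l; lra).
    assert (h2 : Rabs dl * θ * Rabs w <= (θ * B) * θ * (B / g)).
    { apply Rmult_le_compat; [|apply Rabs_pos|apply Rmult_le_compat_r; lra|auto].
      apply Rmult_le_pos; [apply Rabs_pos|lra]. }
    assert (e : θ ^ 2 * (B * (a1 + B / g)) = θ * (B * (a1 * θ)) + θ * B * θ * (B / g)) by ring.
    lra. }
  rewrite <- key, Rabs_mult in hb.
  assert (hpos : g / 2 <= D + dl) by (assert (h := abs_le_inv _ _ Hdel); unfold D, dl in *; lra).
  rewrite (Rabs_right (D + dl)) in hb by lra.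
  assert (hq : g / 2 * Rabs (S a b - θ * w) <= θ ^ 2 * (B * (a1 + B / g))).
  { eapply Rle_trans; [|exact hb]. apply Rmult_le_compat_r; [apply Rabs_pos|lra]. }
  unfold a2. apply Rmult_le_reg_l with (g / 2); [lra|].
  replace (g / 2 * (2 * B * (a1 + B / g) / g * θ ^ 2)) with (θ ^ 2 * (B * (a1 + B / g)))
    by (field; lra). auto.
Qed.

Lemma post3 : Rabs (ν - (- 2 * Lam js - 2 * θ * sumG N G js + 4 * θ ^ 2 * sumH N G Lam js))
  <= a3 * θ ^ 3.
Proof.
  assert (he := eq_at θ ν S js js H ltac:(lia) Hjs).
  rewrite H1, ThetaOp_00, (symm_le S js js (le_n js)), H1 in he.
  rewrite (sumN_ext N _ (fun n => θ * (if Nat.eqb n js then 0 else G js n * symm (W1 G Lam js) js n)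
     + (if Nat.eqb n js then 0 else G js n * (symm S js n - θ * symm (W1 G Lam js) js n))
     + (-1) * (if Nat.eqb n js then 0 else G js n))) in he
    by (intros n _; destruct (Nat.eqb n js); ring).
  rewrite !sumN_plus, !sumN_scal, sumG_alt, sumH_alt in he.
  set (Er := sumN N (fun n => if Nat.eqb n js then 0 else G js n * (symm S js n - θ * symm (W1 G Lam js) js n))) in he.
  assert (hEr : Rabs Er <= INR N * (gm * (a2 * θ ^ 2))).
  { apply sumN_abs_le. intros n Hn. destruct (Nat.eqb_spec n js) as [e|ne].
    - rewrite Rabs_R0. assert (h := gm_nonneg). assert (h2 := a2_nonneg). 
      assert (0 <= a2 * θ ^ 2) by (apply Rmult_le_pos; [auto|apply pow_le; lra]). nra.
    - rewrite Rabs_mult. apply Rmult_le_compat; [apply Rabs_pos|apply Rabs_pos|apply Hgm; auto|].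
      unfold symm. destruct (Nat.leb_spec js n).
      + apply post2; auto; lia.
      + apply post2; auto; lia. }
  replace (ν - (- 2 * Lam js - 2 * θ * sumG N G js + 4 * θ ^ 2 * sumH N G Lam js))
    with (2 * θ * Er) by (replace ν with ((ν + Lam js + Lam js) * 1 - 2 * Lam js) by ring;
                          rewrite he; ring).
  rewrite !Rabs_mult, (Rabs_right 2), (Rabs_right θ) by lra.
  unfold a3. replace (2 * INR N * gm * a2 * θ ^ 3) with (2 * θ * (INR N * (gm * (a2 * θ ^ 2)))) by ring.
  apply Rmult_le_compat_l; [lra|auto].
Qed.

End Post.


Lemma eqG_at θ ν v j : (forall j, (j < N)%nat -> θ * sumN N (fun l => G j l * v l) - Lam j * v j = ν * v j) ->
  (j < N)%nat -> (ν + Lam j) * v j = θ * sumN N (fun l => G j l * v l).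
Proof. intros H Hj. assert (h := H j Hj). lra. Qed.

Lemma G_bound v m j : (forall l, (l < N)%nat -> Rabs (v l) <= m) -> (j < N)%nat ->
  Rabs (sumN N (fun l => G j l * v l)) <= B * m.
Proof.
  intros Hv Hj. assert (Hm : 0 <= m) by (eapply Rle_trans; [apply Rabs_pos|apply (Hv js); lia]).
  eapply Rle_trans; [apply (sumN_abs_le N _ (gm * m))|].
  - intros l Hl. rewrite Rabs_mult. apply Rmult_le_compat; [apply Rabs_pos|apply Rabs_pos|apply Hgm; auto|auto].
  - unfold B, Bc. assert (h := pos_INR N). assert (h2 := gm_nonneg).
    assert (0 <= gm * m) by nra. assert (0 <= INR N * (gm * m)) by nra. nra.
Qed.

Lemma coreG θ ν v j : 0 <= θ ->
  (forall j, (j < N)%nat -> θ * sumN N (fun l => G j l * v l) - Lam j * v j = ν * v j) ->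
  (j < N)%nat -> (forall l, (l < N)%nat -> Rabs (v l) <= Rabs (v j)) ->
  Rabs (ν + Lam j) * Rabs (v j) <= θ * B * Rabs (v j).
Proof.
  intros Ht H Hj Hmax. rewrite <- Rabs_mult, (eqG_at θ ν v j H Hj), Rabs_mult.
  rewrite (Rabs_right θ) by lra. rewrite Rmult_assoc. apply Rmult_le_compat_l; auto.
  apply G_bound; auto.
Qed.

Lemma kernelG θ ν v : 0 <= θ -> θ * B <= g / 4 ->
  (forall a, (a < N)%nat -> g / 2 <= Rabs (ν + Lam a)) ->
  (forall j, (j < N)%nat -> θ * sumN N (fun l => G j l * v l) - Lam j * v j = ν * v j) ->
  forall a, (a < N)%nat -> v a = 0.
Proof.
  intros Ht HtB Hgap2 H a Ha. apply NNPP. intros Hne.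
  destruct (argmaxN N v ltac:(lia)) as [j [Hj Hmax]].
  assert (hc := coreG θ ν v j Ht H Hj Hmax).
  assert (hp : 0 < Rabs (v j)).
  { eapply Rlt_le_trans; [apply Rabs_pos_lt; exact Hne|apply Hmax; auto]. }
  assert (h2 := Hgap2 j Hj). nra.
Qed.

Lemma argmaxG θ ν v : 0 <= θ -> θ * B <= g / 4 -> - Lam js - g / 2 <= ν ->
  (exists j, (j < N)%nat /\ v j <> 0) ->
  (forall j, (j < N)%nat -> θ * sumN N (fun l => G j l * v l) - Lam j * v j = ν * v j) ->
  Rabs (ν + Lam js) <= θ * B /\ v js <> 0 /\
  forall a, (a < N)%nat -> Rabs (v a) <= Rabs (v js).
Proof.
  intros Ht HtB Hnu [a [Ha Hne]] H.
  destruct (argmaxN N v ltac:(lia)) as [j [Hj Hmax]].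
  assert (hc := coreG θ ν v j Ht H Hj Hmax).
  assert (hp : 0 < Rabs (v j)).
  { eapply Rlt_le_trans; [apply Rabs_pos_lt; exact Hne|apply Hmax; auto]. }
  assert (hle : Rabs (ν + Lam j) <= θ * B).
  { apply Rmult_le_reg_r with (Rabs (v j)); auto. }
  destruct (Nat.eq_dec j js) as [->|hn].
  - split; auto. split; auto. intros Hz. rewrite Hz, Rabs_R0 in hp. lra.
  - exfalso. assert (h := Hgap j Hj hn).
    assert (Rabs (ν + Lam j) >= ν + Lam j) by (apply Rle_ge, RRle_abs). lra.
Qed.

Section PostG.
Variables (θ ν : R) (v : nat -> R).
Hypothesis Ht : 0 < θ.
Hypothesis HtB : θ * B <= g / 4.
Hypothesis H : forall j, (j < N)%nat -> θ * sumN N (fun l => G j l * v l) - Lam j * v j = ν * v j.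
Hypothesis H1 : v js = 1.
Hypothesis Hle1 : forall a, (a < N)%nat -> Rabs (v a) <= 1.
Hypothesis Hdel : Rabs (ν + Lam js) <= θ * B.

Lemma postG1 a : (a < N)%nat -> a <> js -> Rabs (v a) <= a1 * θ.
Proof.
  intros Ha Hn. assert (he := eqG_at θ ν v a H Ha).
  assert (hT := G_bound v 1 a Hle1 Ha).
  assert (hD := Hgap a Ha Hn).
  assert (hpos : g / 2 <= ν + Lam a).
  { assert (h := abs_le_inv _ _ Hdel). lra. }
  assert (hx : (g / 2) * Rabs (v a) <= θ * B).
  { apply Rle_trans with (Rabs (ν + Lam a) * Rabs (v a)).
    - apply Rmult_le_compat_r; [apply Rabs_pos|]. rewrite Rabs_right; lra.
    - rewrite <- Rabs_mult, he, Rabs_mult, (Rabs_right θ) by lra.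
      rewrite Rmult_1_r in hT. apply Rmult_le_compat_l; lra. }
  unfold a1. apply Rmult_le_reg_l with (g / 2); [lra|].
  replace (g / 2 * (2 * B / g * θ)) with (θ * B) by (field; lra). auto.
Qed.

Lemma postG2 a : (a < N)%nat -> a <> js ->
  Rabs (v a - θ * (G a js / (Lam a - Lam js))) <= a2 * θ ^ 2.
Proof.
  intros Ha Hn.
  assert (he := eqG_at θ ν v a H Ha).
  rewrite (sumN_split N _ js Hjs), H1 in he.
  set (R0 := sumN N (fun l => if Nat.eqb l js then 0 else G a l * v l)) in he.
  assert (hR : Rabs R0 <= B * (a1 * θ)).
  { eapply Rle_trans; [apply (sumN_abs_le N _ (gm * (a1 * θ)))|].
    - intros l Hl. destruct (Nat.eqb_spec l js).
      + rewrite Rabs_R0. assert (h := gm_nonneg). assert (h2 := a1_nonneg).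
        assert (0 <= a1 * θ) by nra. nra.
      + rewrite Rabs_mult. apply Rmult_le_compat; [apply Rabs_pos|apply Rabs_pos|apply Hgm; auto|].
        apply postG1; auto.
    - unfold B, Bc. assert (h := pos_INR N). assert (h2 := gm_nonneg). assert (h3 := a1_nonneg).
      assert (0 <= a1 * θ) by nra. assert (0 <= gm * (a1 * θ)) by nra.
      assert (0 <= INR N * (gm * (a1 * θ))) by nra. nra. }
  assert (hD := Hgap a Ha Hn).
  set (D := Lam a - Lam js) in *.
  set (dl := ν + Lam js) in *.
  set (w := G a js / D).
  assert (hW : Rabs w <= B / g).
  { unfold w. unfold Rdiv. rewrite Rabs_mult, Rabs_inv, (Rabs_right D) by (unfold D; lra).
    assert (hg1 := Hgm a js Ha Hjs).
    assert (hB : gm <= B) by (unfold B, Bc; assert (h := pos_INR N); assert (h2 := gm_nonneg); nra).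
    apply Rle_trans with (gm * / g).
    - apply Rmult_le_compat; [apply Rabs_pos| left; apply Rinv_0_lt_compat; unfold D; lra|auto|].
      apply Rinv_le_contravar; unfold D; lra.
    - apply Rmult_le_compat_r; [left; apply Rinv_0_lt_compat; lra|auto]. }
  assert (key : (D + dl) * (v a - θ * w) = θ * R0 - dl * θ * w).
  { replace (D + dl) with (ν + Lam a) by (unfold D, dl; ring). rewrite Rmult_minus_distr_l, he.
    unfold w. unfold D, dl. field. unfold D in hD. lra. }
  assert (hb : Rabs (θ * R0 - dl * θ * w) <= θ ^ 2 * (B * (a1 + B / g))).
  { unfold Rminus. eapply Rle_trans; [apply Rabs_triang|]. rewrite Rabs_Ropp, !Rabs_mult.
    rewrite (Rabs_right θ) by lra.
    assert (h1 : θ * Rabs R0 <= θ * (B * (a1 * θ))) by (apply Rmult_le_compat_l; lra).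
    assert (h2 : Rabs dl * θ * Rabs w <= (θ * B) * θ * (B / g)).
    { apply Rmult_le_compat; [|apply Rabs_pos|apply Rmult_le_compat_r; lra|auto].
      apply Rmult_le_pos; [apply Rabs_pos|lra]. }
    assert (e : θ ^ 2 * (B * (a1 + B / g)) = θ * (B * (a1 * θ)) + θ * B * θ * (B / g)) by ring.
    lra. }
  rewrite <- key, Rabs_mult in hb.
  assert (hpos : g / 2 <= D + dl) by (assert (h := abs_le_inv _ _ Hdel); unfold D, dl in *; lra).
  rewrite (Rabs_right (D + dl)) in hb by lra.
  assert (hq : g / 2 * Rabs (v a - θ * w) <= θ ^ 2 * (B * (a1 + B / g))).
  { eapply Rle_trans; [|exact hb]. apply Rmult_le_compat_r; [apply Rabs_pos|lra]. }
  unfold a2. apply Rmult_le_reg_l with (g / 2); [lra|].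
  replace (g / 2 * (2 * B * (a1 + B / g) / g * θ ^ 2)) with (θ ^ 2 * (B * (a1 + B / g)))
    by (field; lra). auto.
Qed.

Lemma postG3 : Rabs (ν - (- Lam js - θ * sumG N G js + θ ^ 2 * sumH N G Lam js)) <= a3 * θ ^ 3.
Proof.
  assert (he := eqG_at θ ν v js H Hjs).
  rewrite (sumN_split N _ js Hjs), H1, HGd, sumG_alt in he.
  rewrite (sumN_ext N _ (fun n => θ * (if Nat.eqb n js then 0 else (G n js)^2 / (Lam n - Lam js))
     + (if Nat.eqb n js then 0 else G js n * (v n - θ * (G n js / (Lam n - Lam js)))))) in he.
  2:{ intros n Hn. destruct (Nat.eqb_spec n js) as [e|ne]; [ring|].
      assert (h := Hgap n Hn ne). rewrite (HGs js n) by auto. field. lra. }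
  rewrite !sumN_plus, !sumN_scal in he. fold (sumH N G Lam js) in he.
  set (Er := sumN N (fun n => if Nat.eqb n js then 0 else G js n * (v n - θ * (G n js / (Lam n - Lam js))))) in he.
  assert (hEr : Rabs Er <= INR N * (gm * (a2 * θ ^ 2))).
  { apply sumN_abs_le. intros n Hn. destruct (Nat.eqb_spec n js) as [e|ne].
    - rewrite Rabs_R0. assert (h := gm_nonneg). assert (h2 := a2_nonneg).
      assert (0 <= a2 * θ ^ 2) by (apply Rmult_le_pos; [auto|apply pow_le; lra]). nra.
    - rewrite Rabs_mult. apply Rmult_le_compat; [apply Rabs_pos|apply Rabs_pos|apply Hgm; auto|].
      apply postG2; auto. }
  replace (ν - (- Lam js - θ * sumG N G js + θ ^ 2 * sumH N G Lam js)) with (θ * Er)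
    by (replace ν with ((ν + Lam js) * 1 - Lam js) by ring; rewrite he; ring).
  rewrite !Rabs_mult, (Rabs_right θ) by lra.
  assert (hN := pos_INR N). assert (h := gm_nonneg). assert (h2 := a2_nonneg).
  assert (0 <= INR N * (gm * (a2 * θ ^ 2))) by
    (apply Rmult_le_pos; [auto|apply Rmult_le_pos; [auto|apply Rmult_le_pos; [auto|apply pow_le; lra]]]).
  unfold a3. apply Rle_trans with (θ * (INR N * (gm * (a2 * θ ^ 2)))).
  - apply Rmult_le_compat_l; lra.
  - replace (2 * INR N * gm * a2 * θ ^ 3) with (2 * (θ * (INR N * (gm * (a2 * θ ^ 2))))) by ring.
    assert (0 <= θ * (INR N * (gm * (a2 * θ ^ 2)))) by (apply Rmult_le_pos; lra). lra.
Qed.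

End PostG.

End ThetaAn.


Definition GenStmt := forall (K : nat) (d : nat -> R) (E : nat -> nat -> R) (lo hi th : R),
  lo <= hi -> 0 <= th ->
  (forall t nu v, 0 <= t <= th -> (nu = lo \/ nu = hi) ->
     (forall k, (k < K)%nat -> nu * v k - d k * v k - t * sumN K (fun k' => E k k' * v k') = 0) ->
     forall k, (k < K)%nat -> v k = 0) ->
  prodN K (fun k => lo - d k) * prodN K (fun k => hi - d k) < 0 ->
  exists nu, lo <= nu <= hi /\ exists v, (exists k, (k<K)%nat /\ v k <> 0) /\
     forall k, (k<K)%nat -> nu * v k - d k * v k - th * sumN K (fun k' => E k k' * v k') = 0.

Lemma dec_facts N k : (N <> 0)%nat -> k = (k / N * N + k mod N)%nat /\ (k mod N < N)%nat.
Proof.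
  intros HN. split.
  - rewrite (Nat.div_mod_eq k N) at 1. lia.
  - apply Nat.mod_upper_bound; auto.
Qed.

Lemma dec_pair N a b : (b < N)%nat -> ((a * N + b) / N = a /\ (a * N + b) mod N = b)%nat.
Proof.
  intros Hb. assert (HN : (N <> 0)%nat) by lia.
  destruct (dec_facts N (a * N + b) HN) as [e1 e2].
  assert (h := Nat.div_mod_unique N ((a * N + b) / N) a ((a * N + b) mod N) b e2 Hb ltac:(lia)).
  lia.
Qed.

Definition ek (N k' : nat) : nat -> nat -> R :=
  fun a b => if andb (Nat.eqb a (k' / N)) (Nat.eqb b (k' mod N)) then 1 else 0.

Lemma ek_eq N a b k' : (b < N)%nat -> ek N k' a b = if Nat.eqb k' (a * N + b) then 1 else 0.
Proof.
  intros Hb. unfold ek. assert (HN : (N <> 0)%nat) by lia.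
  destruct (Nat.eqb_spec k' (a * N + b)) as [->|ne].
  - destruct (dec_pair N a b Hb) as [e1 e2]. rewrite e1, e2, !Nat.eqb_refl. reflexivity.
  - destruct (Nat.eqb_spec a (k' / N)); destruct (Nat.eqb_spec b (k' mod N)); simpl; auto.
    destruct (dec_facts N k' HN). exfalso. apply ne. lia.
Qed.

Lemma lin_theta N G (v : nat -> R) a b : (a < N)%nat -> (b < N)%nat ->
  sumN (N * N) (fun k' => ThetaOp N G (ek N k') a b * v k') =
  ThetaOp N G (fun x y => v (x * N + y)%nat) a b.
Proof.
  intros Ha Hb.
  rewrite (sumN_ext _ _ (fun k' => v k' * ThetaOp N G (ek N k') a b)) by (intros; ring).
  rewrite <- ThetaOp_sum. apply ThetaOp_ext; auto.
  intros x y Hx Hy.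
  rewrite (sumN_ext _ _ (fun k' => if Nat.eqb k' (x * N + y) then v k' else 0)).
  - apply sumN_delta. nia.
  - intros k _. rewrite ek_eq by auto. destruct (Nat.eqb k (x * N + y)); ring.
Qed.

Definition Emat (N : nat) (G : nat -> nat -> R) (k k' : nat) : R :=
  if Nat.leb (k / N) (k mod N) then ThetaOp N G (ek N k') (k / N) (k mod N) else 0.

Set Default Proof Using "All".
Section Exist.
Variables (N : nat) (G : nat -> nat -> R) (Lam : nat -> R) (js : nat) (g gm : R).
Hypothesis Hjs : (js < N)%nat.
Hypothesis Hg : 0 < g.
Hypothesis Hgap : forall j, (j < N)%nat -> j <> js -> Lam js + g <= Lam j.
Hypothesis Hgm : forall j l, (j < N)%nat -> (l < N)%nat -> Rabs (G j l) <= gm.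
Hypothesis HGs : forall j l, (j < N)%nat -> (l < N)%nat -> G j l = G l j.
Hypothesis HGd : G js js = - sumN N (fun l => if Nat.eqb l js then 0 else G js l).
Hypothesis Hgen : GenStmt.

Let B := Bc N gm.

Lemma Lam_pair2 a b : (a < N)%nat -> (b < N)%nat -> ~ (a = js /\ b = js) ->
  2 * Lam js + g <= Lam a + Lam b.
Proof.
  intros Ha Hb Hn. assert (ha := Lam_ge N G Lam js g gm Hjs Hg Hgap Hgm HGs HGd a Ha). assert (hb := Lam_ge N G Lam js g gm Hjs Hg Hgap Hgm HGs HGd b Hb).
  destruct (Nat.eq_dec a js) as [->|na].
  - assert (b <> js) by tauto. assert (h := Hgap b Hb H). lra.
  - assert (h := Hgap a Ha na). lra.
Qed.

Definition dT (k : nat) : R := - (Lam (k / N) + Lam (k mod N)).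

Lemma conv_eq θ ν (v : nat -> R) :
  (forall k, (k < N * N)%nat -> ν * v k - dT k * v k - θ * sumN (N * N) (fun k' => Emat N G k k' * v k') = 0) ->
  forall a b, (a <= b)%nat -> (b < N)%nat -> opT N G Lam θ (fun x y => v (x * N + y)%nat) a b = ν * v (a * N + b)%nat.
Proof.
  intros H a b Hab Hb. assert (hk : (a * N + b < N * N)%nat) by nia.
  assert (h := H _ hk). destruct (dec_pair N a b Hb) as [e1 e2].
  unfold dT, Emat in h. rewrite e1, e2, (proj2 (Nat.leb_le a b) Hab) in h.
  rewrite lin_theta in h by lia.
  unfold opT, PsiOp. rewrite symm_le by auto. lra.
Qed.

Lemma lower_zero θ ν (v : nat -> R) k :
  (forall k, (k < N * N)%nat -> ν * v k - dT k * v k - θ * sumN (N * N) (fun k' => Emat N G k k' * v k') = 0) ->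
  (k < N * N)%nat -> (k mod N < k / N)%nat -> - 2 * Lam js - g / 2 <= ν -> v k = 0.
Proof.
  intros H hk hlt hnu. assert (h := H k hk). unfold Emat in h.
  rewrite (proj2 (Nat.leb_gt _ _) hlt) in h.
  rewrite sumN_zero in h by (intros; ring).
  assert (HN : (N <> 0)%nat) by lia. destruct (dec_facts N k HN) as [e1 e2].
  assert (hq : (k / N < N)%nat) by nia.
  assert (hp := Lam_pair2 (k / N) (k mod N) hq e2 ltac:(lia)).
  unfold dT in h. assert (hz : (ν + Lam (k / N) + Lam (k mod N)) * v k = 0) by lra.
  apply Rmult_integral in hz. destruct hz; [lra|auto].
Qed.

Lemma existsT θ : 0 <= θ -> θ * B <= g / 4 ->
  exists ν, - 2 * Lam js - g / 2 <= ν /\ is_eigT N (opT N G Lam θ) ν.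
Proof.
  intros Ht HtB.
  assert (hB : 0 < B) by (apply (B_pos N G Lam js g gm Hjs Hg Hgap Hgm HGs HGd)).
  set (lo := - 2 * Lam js - g / 2). set (hi := - 2 * Lam js + g / 2).
  assert (HN : (N <> 0)%nat) by lia.
  destruct (Hgen (N * N)%nat dT (Emat N G) lo hi θ) as [ν [[h1 h2] [v [[k [hk hv]] Heq]]]].
  - unfold lo, hi; lra.
  - auto.
  - intros t nu v [ht1 ht2] hnu Heq k hk.
    assert (hlo : lo <= nu) by (destruct hnu; subst; unfold lo, hi; lra).
    assert (hS := kernelT N G Lam js g gm Hjs Hg Hgap Hgm HGs HGd t nu (fun x y => v (x * N + y)%nat) ht1
      ltac:(unfold B in *; nra)).
    destruct (dec_facts N k HN) as [e1 e2].
    destruct (Nat.leb_spec (k / N) (k mod N)) as [hab|hab].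
    + rewrite e1. apply hS; auto.
      * intros a b Hab Hb. assert (ha := Lam_ge N G Lam js g gm Hjs Hg Hgap Hgm HGs HGd a ltac:(lia)).
        assert (hb := Lam_ge N G Lam js g gm Hjs Hg Hgap Hgm HGs HGd b Hb).
        destruct hnu as [->| ->]; unfold lo, hi.
        -- destruct (classic (a = js /\ b = js)) as [[-> ->]|hn].
           ++ replace (- 2 * Lam js - g / 2 + Lam js + Lam js) with (- (g / 2)) by ring.
              rewrite Rabs_Ropp, Rabs_right; lra.
           ++ assert (hp := Lam_pair N G Lam js g gm Hjs Hg Hgap Hgm HGs HGd a b Hab Hb hn).
              rewrite Rabs_right; lra.
        -- rewrite Rabs_right; lra.
      * apply conv_eq; auto.
    + apply (lower_zero t nu v k Heq hk hab hlo).
  - apply Rmult_neg_pos.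
    + apply (prodN_neg _ _ (js * N + js)%nat).
      * nia.
      * destruct (dec_pair N js js Hjs) as [e1 e2]. unfold dT. rewrite e1, e2. unfold lo. lra.
      * intros k hk hne. destruct (dec_facts N k HN) as [e1 e2].
        assert (hq : (k / N < N)%nat) by nia.
        assert (hp := Lam_pair2 (k / N) (k mod N) hq e2 ltac:(intros [x y]; apply hne; lia)).
        unfold dT, lo. lra.
    + apply prodN_pos. intros k hk. destruct (dec_facts N k HN) as [e1 e2].
      assert (hq : (k / N < N)%nat) by nia.
      assert (ha := Lam_ge N G Lam js g gm Hjs Hg Hgap Hgm HGs HGd _ hq). assert (hb := Lam_ge N G Lam js g gm Hjs Hg Hgap Hgm HGs HGd _ e2).
      unfold dT, hi. lra.
  - exists ν. split; [auto|].
    exists (fun x y => v (x * N + y)%nat). split.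
    + destruct (dec_facts N k HN) as [e1 e2].
      destruct (Nat.leb_spec (k / N) (k mod N)) as [hab|hab].
      * exists (k / N)%nat, (k mod N)%nat. split; [auto|split; [auto|]]. rewrite <- e1. auto.
      * exfalso. apply hv. apply (lower_zero θ ν v k Heq hk hab h1).
    + apply conv_eq; auto.
Qed.

Lemma existsG θ : 0 <= θ -> θ * B <= g / 4 ->
  exists ν, - Lam js - g / 2 <= ν /\ is_eigN N G Lam θ ν.
Proof.
  intros Ht HtB.
  assert (hB : 0 < B) by (apply (B_pos N G Lam js g gm Hjs Hg Hgap Hgm HGs HGd)).
  set (lo := - Lam js - g / 2). set (hi := - Lam js + g / 2).
  destruct (Hgen N (fun k => - Lam k) G lo hi θ) as [ν [[h1 h2] [v [Hnz Heq]]]].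
  - unfold lo, hi; lra.
  - auto.
  - intros t nu v [ht1 ht2] hnu Heq k hk.
    apply (kernelG N G Lam js g gm Hjs Hg Hgap Hgm HGs HGd t nu v ht1 ltac:(unfold B in *; nra)); auto.
    + intros a Ha. assert (ha := Lam_ge N G Lam js g gm Hjs Hg Hgap Hgm HGs HGd a Ha).
      destruct hnu as [->| ->]; unfold lo, hi.
      * destruct (Nat.eq_dec a js) as [->|hn].
        -- replace (- Lam js - g / 2 + Lam js) with (- (g / 2)) by ring.
           rewrite Rabs_Ropp, Rabs_right; lra.
        -- assert (hp := Hgap a Ha hn). rewrite Rabs_right; lra.
      * rewrite Rabs_right; lra.
    + intros j Hj. assert (h := Heq j Hj). lra.
  - apply Rmult_neg_pos.
    + apply (prodN_neg _ _ js); auto.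
      * unfold lo. lra.
      * intros k hk hne. assert (hp := Hgap k hk hne). unfold lo. lra.
    + apply prodN_pos. intros k hk. assert (ha := Lam_ge N G Lam js g gm Hjs Hg Hgap Hgm HGs HGd _ hk). unfold hi. lra.
  - exists ν. split; [auto|]. exists v. split; auto.
    intros j Hj. assert (h := Heq j Hj). lra.
Qed.

End Exist.


Lemma sumN_const n c : sumN n (fun _ => c) = INR n * c.
Proof. induction n; cbn [sumN]; [simpl; ring|rewrite IHn, S_INR; ring]. Qed.

Lemma sumT_nonneg N F : (forall j l, 0 <= F j l) -> 0 <= sumT N F.
Proof.
  intros H. unfold sumT. apply sumN_nonneg. intros j _. apply sumN_nonneg. intros l _.
  destruct (Nat.leb j l); [apply H|lra].
Qed.

Lemma sumT_ge00 N F js : (js < N)%nat -> (forall j l, 0 <= F j l) -> F js js <= sumT N F.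
Proof.
  intros Hjs H. unfold sumT.
  eapply Rle_trans; [|apply (sumN_ge_term N _ js); auto].
  - eapply Rle_trans; [|apply (sumN_ge_term N (fun l => if Nat.leb js l then F js l else 0) js); auto].
    + rewrite Nat.leb_refl. lra.
    + intros l _. destruct (Nat.leb js l); [apply H|lra].
  - intros j _. apply sumN_nonneg. intros l _. destruct (Nat.leb j l); [apply H|lra].
Qed.

Lemma sumT_bound N F js c : (js < N)%nat -> 0 <= c ->
  (forall j l, (j <= l)%nat -> (l < N)%nat -> ~ (j = js /\ l = js) -> F j l <= c) ->
  sumT N F <= F js js + (INR N + INR N * INR N) * c.
Proof.
  intros Hjs Hc H. unfold sumT.
  rewrite (sumN_split N _ js Hjs).
  rewrite (sumN_split N (fun l => if Nat.leb js l then F js l else 0) js Hjs).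
  rewrite Nat.leb_refl.
  assert (h1 : sumN N (fun k => if Nat.eqb k js then 0 else if Nat.leb js k then F js k else 0) <= INR N * c).
  { rewrite <- sumN_const. apply sumN_le. intros k Hk.
    destruct (Nat.eqb_spec k js); [lra|]. destruct (Nat.leb_spec js k); [apply H; auto; lia|lra]. }
  assert (h2 : sumN N (fun k => if Nat.eqb k js then 0 else sumN N (fun l => if Nat.leb k l then F k l else 0))
      <= INR N * (INR N * c)).
  { rewrite <- sumN_const. apply sumN_le. intros k Hk.
    destruct (Nat.eqb_spec k js).
    - assert (0 <= INR N) by apply pos_INR. nra.
    - rewrite <- sumN_const. apply sumN_le. intros l Hl.
      destruct (Nat.leb_spec k l); [apply H; auto; lia|lra]. }
  nra.
Qed.

Lemma normT_bound N X e : 0 <= e -> (forall j l, (j <= l)%nat -> (l < N)%nat -> Rabs (X j l) <= e) ->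
  normT N X <= INR N * e.
Proof.
  intros He H. unfold normT.
  assert (hN := pos_INR N).
  rewrite <- (sqrt_square (INR N * e)) by nra.
  apply sqrt_le_1_alt.
  unfold sumT. replace (INR N * e * (INR N * e)) with (INR N * (INR N * (e * e))) by ring.
  rewrite <- sumN_const. apply sumN_le. intros j Hj. rewrite <- sumN_const. apply sumN_le. intros l Hl.
  destruct (Nat.leb_spec j l).
  - assert (h := H j l H0 Hl). assert (h2 := Rabs_pos (X j l)).
    assert (Rabs (X j l) * Rabs (X j l) = X j l ^ 2) by (rewrite <- Rabs_mult, Rabs_right; [ring|nra]).
    nra.
  - nra.
Qed.

Definition Ka1 N gm g := 2 * Bc N gm / g.
Definition Ka2 N gm g := 2 * Bc N gm * (Ka1 N gm g + Bc N gm / g) / g.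
Definition Ka3 N gm g := 2 * INR N * gm * Ka2 N gm g.

Lemma reach_first N G js l : reach N G js l ->
  l = js \/ exists m, (m < N)%nat /\ m <> js /\ 0 < G js m.
Proof.
  induction 1 as [|m l Hr IH Hm Hl Hne Hpos].
  - left; auto.
  - right. destruct IH as [->|IH]; [|exact IH]. exists l. split; [auto|split; [auto|auto]].
Qed.

Lemma gap_exists N Lam js : (forall j, (j < N)%nat -> j <> js -> Lam js < Lam j) ->
  exists g, 0 < g /\ forall j, (j < N)%nat -> j <> js -> Lam js + g <= Lam j.
Proof.
  intros H.
  assert (Hn : forall n, exists g, 0 < g /\ forall j, (j < n)%nat -> (j < N)%nat -> j <> js -> Lam js + g <= Lam j).
  { induction n.
    - exists 1. split; [lra|]. intros; lia.
    - destruct IHn as [g [Hg Hj]].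
      destruct (Nat.lt_ge_cases n N) as [hn|hn]; [destruct (Nat.eq_dec n js) as [e|ne]|].
      + exists g. split; auto. intros j Hj1 Hj2 Hj3. apply Hj; auto. lia.
      + exists (Rmin g (Lam n - Lam js)). split.
        * apply Rmin_pos; auto. assert (h := H n hn ne). lra.
        * intros j Hj1 Hj2 Hj3. destruct (Nat.eq_dec j n) as [->|jn].
          -- assert (h := Rmin_r g (Lam n - Lam js)). lra.
          -- assert (h := Hj j ltac:(lia) Hj2 Hj3). assert (h2 := Rmin_l g (Lam n - Lam js)). lra.
      + exists g. split; auto. intros j Hj1 Hj2 Hj3. apply Hj; auto. lia. }
  destruct (Hn N) as [g [Hg Hj]]. exists g. split; auto.
Qed.


Lemma opT_scal N G Lam θ ν S c :
  (forall a b, (a <= b)%nat -> (b < N)%nat -> opT N G Lam θ S a b = ν * S a b) ->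
  forall a b, (a <= b)%nat -> (b < N)%nat ->
    opT N G Lam θ (fun x y => c * S x y) a b = ν * (c * S a b).
Proof.
  intros H a b Hab Hb. assert (h := H a b Hab Hb). unfold opT, PsiOp in *.
  rewrite ThetaOp_scal by lia. rewrite !symm_le in * by auto.
  replace (θ * (c * ThetaOp N G S a b) - (Lam a + Lam b) * (c * S a b))
    with (c * (θ * ThetaOp N G S a b - (Lam a + Lam b) * S a b)) by ring.
  rewrite h. ring.
Qed.

Set Default Proof Using "All".
Section Main.
Variables (N : nat) (G : nat -> nat -> R) (Lam : nat -> R) (js : nat) (g gm : R).
Hypothesis Hjs : (js < N)%nat.
Hypothesis Hg : 0 < g.
Hypothesis Hgap : forall j, (j < N)%nat -> j <> js -> Lam js + g <= Lam j.
Hypothesis Hgm : forall j l, (j < N)%nat -> (l < N)%nat -> Rabs (G j l) <= gm.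
Hypothesis HGs : forall j l, (j < N)%nat -> (l < N)%nat -> G j l = G l j.
Hypothesis HGd : G js js = - sumN N (fun l => if Nat.eqb l js then 0 else G js l).
Hypothesis Hgen : GenStmt.
Variables (mu lam : R -> R).
Hypothesis Hmu : forall theta, 0 < theta -> is_largest (is_eigT N (opT N G Lam theta)) (- mu theta).
Hypothesis Hlam : forall theta, 0 < theta -> is_largest (is_eigN N G Lam theta) (- lam theta).

Let B := Bc N gm.

Lemma mu_low θ : 0 < θ -> θ * B <= g / 4 -> - 2 * Lam js - g / 2 <= - mu θ.
Proof.
  intros Ht HtB.
  destruct (existsT N G Lam js g gm Hjs Hg Hgap Hgm HGs HGd Hgen θ ltac:(lra) HtB) as [ν [hν he]].
  destruct (Hmu θ Ht) as [_ hl]. assert (h := hl ν he). lra.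
Qed.

Lemma norm_eig θ ν S : 0 < θ -> θ * B <= g / 4 -> - 2 * Lam js - g / 2 <= ν ->
  is_eigvecT N (opT N G Lam θ) ν S ->
  let T := fun x y => / S js js * S x y in
  (forall a b, (a <= b)%nat -> (b < N)%nat -> opT N G Lam θ T a b = ν * T a b) /\
  T js js = 1 /\ (forall a b, (a <= b)%nat -> (b < N)%nat -> Rabs (T a b) <= 1) /\
  Rabs (ν + 2 * Lam js) <= θ * B /\ S js js <> 0 /\
  (forall a b, (a <= b)%nat -> (b < N)%nat -> Rabs (S a b) <= Rabs (S js js)).
Proof.
  intros Ht HtB Hnu He T.
  destruct (argmax0 N G Lam js g gm Hjs Hg Hgap Hgm HGs HGd θ ν S ltac:(lra) HtB Hnu He)
    as [hd [hnz hmax]].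
  split; [|split; [|split; [|split; [auto|split; auto]]]].
  - unfold T. apply opT_scal. apply (proj2 He).
  - unfold T. field. auto.
  - intros a b Hab Hb. unfold T. rewrite Rabs_mult, Rabs_inv.
    apply Rmult_le_reg_l with (Rabs (S js js)); [apply Rabs_pos_lt; auto|].
    rewrite <- Rmult_assoc, Rinv_r, Rmult_1_l, Rmult_1_r; [apply hmax; auto|].
    apply Rabs_no_R0; auto.
Qed.

Lemma mu_bound θ : 0 < θ -> θ * B <= g / 4 ->
  Rabs (mu θ - (2 * Lam js + 2 * θ * sumG N G js - 4 * θ ^ 2 * sumH N G Lam js))
    <= Ka3 N gm g * θ ^ 3.
Proof.
  intros Ht HtB.
  assert (hlo := mu_low θ Ht HtB).
  destruct (Hmu θ Ht) as [[S He] _].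
  destruct (norm_eig θ (- mu θ) S Ht HtB hlo He) as [h1 [h2 [h3 [h4 _]]]].
  assert (h := post3 N G Lam js g gm Hjs Hg Hgap Hgm HGs HGd θ (- mu θ) _ Ht HtB h1 h2 h3 h4).
  replace (mu θ - (2 * Lam js + 2 * θ * sumG N G js - 4 * θ ^ 2 * sumH N G Lam js))
    with (- (- mu θ - (- 2 * Lam js - 2 * θ * sumG N G js + 4 * θ ^ 2 * sumH N G Lam js))) by ring.
  rewrite Rabs_Ropp. unfold Ka3, Ka2, Ka1. exact h.
Qed.

Lemma lam_bound θ : 0 < θ -> θ * B <= g / 4 ->
  Rabs (lam θ - (Lam js + θ * sumG N G js - θ ^ 2 * sumH N G Lam js)) <= Ka3 N gm g * θ ^ 3.
Proof.
  intros Ht HtB.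
  destruct (existsG N G Lam js g gm Hjs Hg Hgap Hgm HGs HGd Hgen θ ltac:(lra) HtB) as [ν [hν he]].
  destruct (Hlam θ Ht) as [[v [Hnz Hv]] hl]. assert (hlo := hl ν he).
  destruct (argmaxG N G Lam js g gm Hjs Hg Hgap Hgm HGs HGd θ (- lam θ) v ltac:(lra) HtB ltac:(lra) Hnz Hv)
    as [hd [hnz hmax]].
  set (u := fun x => / v js * v x).
  assert (hu : forall j, (j < N)%nat -> θ * sumN N (fun l => G j l * u l) - Lam j * u j = - lam θ * u j).
  { intros j Hj. unfold u.
    rewrite (sumN_ext N _ (fun l => / v js * (G j l * v l))) by (intros; ring).
    rewrite sumN_scal. assert (h := Hv j Hj).
    replace (θ * (/ v js * sumN N (fun l => G j l * v l)) - Lam j * (/ v js * v j))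
      with (/ v js * (θ * sumN N (fun l => G j l * v l) - Lam j * v j)) by ring.
    rewrite h. ring. }
  assert (hu1 : u js = 1) by (unfold u; field; auto).
  assert (hule : forall a, (a < N)%nat -> Rabs (u a) <= 1).
  { intros a Ha. unfold u. rewrite Rabs_mult, Rabs_inv.
    apply Rmult_le_reg_l with (Rabs (v js)); [apply Rabs_pos_lt; auto|].
    rewrite <- Rmult_assoc, Rinv_r, Rmult_1_l, Rmult_1_r; [apply hmax; auto|].
    apply Rabs_no_R0; auto. }
  assert (h := postG3 N G Lam js g gm Hjs Hg Hgap Hgm HGs HGd θ (- lam θ) u Ht HtB hu hu1 hule hd).
  replace (lam θ - (Lam js + θ * sumG N G js - θ ^ 2 * sumH N G Lam js))
    with (- (- lam θ - (- Lam js - θ * sumG N G js + θ ^ 2 * sumH N G Lam js))) by ring.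
  rewrite Rabs_Ropp. unfold Ka3, Ka2, Ka1. exact h.
Qed.

Definition C0 := (INR N + INR N * INR N) * Ka1 N gm g ^ 2.
Definition C2 := Ka2 N gm g + C0 + C0 * (B / g).

Lemma W_bound θ W : 0 < θ -> θ <= 1 -> θ * B <= g / 4 ->
  is_eigvecT N (opT N G Lam θ) (- mu θ) W -> normT N W = 1 -> 0 < W js js ->
  normT N (fun j l => W j l - W0 js j l - θ * W1 G Lam js j l) <= INR N * C2 * θ ^ 2.
Proof.
  intros Ht Ht1 HtB He Hn Hpos.
  assert (hlo := mu_low θ Ht HtB).
  destruct (norm_eig θ (- mu θ) W Ht HtB hlo He) as [h1 [h2 [h3 [h4 [h5 h6]]]]].
  set (T := fun x y => / W js js * W x y) in *.
  set (w0 := W js js) in *.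
  assert (hp1 := post1 N G Lam js g gm Hjs Hg Hgap Hgm HGs HGd θ (- mu θ) T Ht HtB h1 h2 h3 h4).
  assert (hp2 := post2 N G Lam js g gm Hjs Hg Hgap Hgm HGs HGd θ (- mu θ) T Ht HtB h1 h2 h3 h4).
  fold (Ka1 N gm g) in hp1. fold (Ka1 N gm g) in hp2. fold (Ka2 N gm g) in hp2.
  assert (hWT : forall a b, W a b = w0 * T a b) by (intros; unfold T, w0 in *; field; lra).
  assert (hA1 : 0 <= Ka1 N gm g) by (apply (a1_nonneg N G Lam js g gm Hjs Hg Hgap Hgm HGs HGd)).
  assert (hA2 : 0 <= Ka2 N gm g) by (apply (a2_nonneg N G Lam js g gm Hjs Hg Hgap Hgm HGs HGd)).
  assert (hB : 0 < B) by (apply (B_pos N G Lam js g gm Hjs Hg Hgap Hgm HGs HGd)).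
  assert (hN := pos_INR N).
  assert (hsum : sumT N (fun j l => W j l ^ 2) = 1).
  { unfold normT in Hn.
    assert (hnn : 0 <= sumT N (fun j l => W j l ^ 2)) by (apply sumT_nonneg; intros; apply pow2_ge_0).
    rewrite <- (sqrt_sqrt _ hnn), Hn. ring. }
  assert (hw1 : w0 <= 1).
  { assert (h := sumT_ge00 N (fun j l => W j l ^ 2) js Hjs ltac:(intros; apply pow2_ge_0)).
    rewrite hsum in h. change (w0 ^ 2 <= 1) in h. nra. }
  assert (hw2 : 1 - w0 <= C0 * θ ^ 2).
  { assert (h := sumT_bound N (fun j l => W j l ^ 2) js (w0 ^ 2 * (Ka1 N gm g * θ) ^ 2) Hjs
      ltac:(apply Rmult_le_pos; apply pow2_ge_0)).
    assert (h' : sumT N (fun j l => W j l ^ 2) <= W js js ^ 2 + (INR N + INR N * INR N) * (w0 ^ 2 * (Ka1 N gm g * θ) ^ 2)).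
    { apply h. intros j l Hjl Hl Hne. rewrite hWT. assert (hh := hp1 j l Hjl Hl Hne).
      assert (0 <= Rabs (T j l)) by apply Rabs_pos.
      assert (Rabs (T j l) * Rabs (T j l) = T j l ^ 2) by (rewrite <- Rabs_mult, Rabs_right; [ring|nra]).
      assert (T j l ^ 2 <= (Ka1 N gm g * θ) ^ 2) by nra.
      replace ((w0 * T j l) ^ 2) with (w0 ^ 2 * T j l ^ 2) by ring.
      apply Rmult_le_compat_l; [apply pow2_ge_0|auto]. }
    rewrite hsum in h'. fold w0 in h'. unfold C0.
    set (K := INR N + INR N * INR N) in *.
    assert (hK : 0 <= K) by (unfold K; nra).
    assert (e : (Ka1 N gm g * θ) ^ 2 = Ka1 N gm g ^ 2 * θ ^ 2) by ring. rewrite e in h'.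
    assert (hx : 0 <= K * (Ka1 N gm g ^ 2 * θ ^ 2)) by (apply Rmult_le_pos; [auto|apply Rmult_le_pos; apply pow2_ge_0]).
    assert (1 - w0 <= 1 - w0 ^ 2) by nra.
    assert (1 - w0 ^ 2 <= w0 ^ 2 * (K * (Ka1 N gm g ^ 2 * θ ^ 2))) by nra.
    assert (w0 ^ 2 * (K * (Ka1 N gm g ^ 2 * θ ^ 2)) <= K * (Ka1 N gm g ^ 2 * θ ^ 2)).
    { assert (w0 ^ 2 <= 1) by nra. nra. }
    replace (K * Ka1 N gm g ^ 2 * θ ^ 2) with (K * (Ka1 N gm g ^ 2 * θ ^ 2)) by ring. lra. }
  assert (hC0 : 0 <= C0) by (unfold C0; apply Rmult_le_pos; [nra|apply pow2_ge_0]).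
  assert (hBg : 0 <= B / g) by (apply Rle_mult_inv_pos; lra).
  assert (hC2 : 0 <= C2 * θ ^ 2) by (unfold C2; apply Rmult_le_pos; [nra|apply pow2_ge_0]).
  apply Rle_trans with (INR N * (C2 * θ ^ 2)); [|right; ring].
  apply normT_bound; auto.
  intros j l Hjl Hl.
  assert (hθ2 : 0 <= θ ^ 2) by apply pow2_ge_0.
  destruct (classic (j = js /\ l = js)) as [[-> ->]|hne].
  - unfold W0, W1. rewrite Nat.eqb_refl, Nat.ltb_irrefl. simpl. fold w0.
    rewrite Rabs_left1 by lra. unfold C2. nra.
  - assert (hW0 : W0 js j l = 0).
    { unfold W0. destruct (Nat.eqb_spec j js); destruct (Nat.eqb_spec l js); simpl; auto; tauto. }
    rewrite hW0, hWT.
    replace (w0 * T j l - 0 - θ * W1 G Lam js j l) with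
      (w0 * (T j l - θ * W1 G Lam js j l) + (w0 - 1) * θ * W1 G Lam js j l) by ring.
    eapply Rle_trans; [apply Rabs_triang|]. rewrite !Rabs_mult.
    assert (hq := hp2 j l Hjl Hl hne).
    assert (hwb := W1_bound N G Lam js g gm Hjs Hg Hgap Hgm HGs HGd j l Hjl Hl hne).
    rewrite (Rabs_right w0) by lra. rewrite (Rabs_right θ) by lra.
    assert (e1 : w0 * Rabs (T j l - θ * W1 G Lam js j l) <= Ka2 N gm g * θ ^ 2).
    { apply Rle_trans with (1 * Rabs (T j l - θ * W1 G Lam js j l)).
      - apply Rmult_le_compat_r; [apply Rabs_pos|lra].
      - lra. }
    assert (e2 : Rabs (w0 - 1) * θ * Rabs (W1 G Lam js j l) <= C0 * θ ^ 2 * (B / g)).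
    { rewrite Rabs_left1 by lra.
      apply Rmult_le_compat; [apply Rmult_le_pos; lra|apply Rabs_pos| |exact hwb].
      replace (C0 * θ ^ 2) with (C0 * θ ^ 2 * 1) by ring.
      apply Rmult_le_compat; lra. }
    unfold C2. nra.
Qed.

End Main.


Lemma sumH_pos N G Lam js : (2 <= N)%nat -> (js < N)%nat ->
  (forall j, (j < N)%nat -> j <> js -> Lam js < Lam j) ->
  (forall j l, (j < N)%nat -> (l < N)%nat -> G j l = G l j) ->
  irreducible N G -> 0 < sumH N G Lam js.
Proof.
  intros HN Hjs Hmin HGs Hirr.
  set (l0 := if Nat.eqb js 0 then 1%nat else 0%nat).
  assert (hl0 : (l0 < N)%nat /\ l0 <> js).
  { unfold l0. destruct (Nat.eqb_spec js 0); lia. }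
  destruct (reach_first N G js l0 (Hirr js l0 Hjs (proj1 hl0))) as [e|[m [Hm [Hne Hp]]]].
  - exfalso. apply (proj2 hl0). auto.
  - unfold sumH.
    apply Rlt_le_trans with ((if Nat.eqb m js then 0 else G m js ^ 2 / (Lam m - Lam js))).
    + destruct (Nat.eqb_spec m js); [lia|]. assert (h := Hmin m Hm Hne).
      rewrite (HGs m js) by auto. apply Rdiv_lt_0_compat; [|lra]. apply pow_lt. auto.
    + apply (sumN_ge_term N (fun j => if Nat.eqb j js then 0 else G j js ^ 2 / (Lam j - Lam js))); auto.
      intros k Hk. destruct (Nat.eqb_spec k js); [lra|]. assert (h := Hmin k Hk n).
      apply Rle_mult_inv_pos; [apply pow2_ge_0|lra].
Qed.

Lemma main_aux (Hgen : GenStmt) (N : nat) (HN : (2 <= N)%nat)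
  (Lam : nat -> R) (G : nat -> nat -> R) (js : nat)
  (HLam : forall j, (j < N)%nat -> 0 <= Lam j)
  (Hjs : (js < N)%nat)
  (Hmin : forall j, (j < N)%nat -> j <> js -> Lam js < Lam j)
  (HG : gamma_ok N G) (Hirr : irreducible N G)
  (mu lam : R -> R)
  (Hmu : forall theta, 0 < theta ->
           is_largest (is_eigT N (opT N G Lam theta)) (- mu theta))
  (Hlam : forall theta, 0 < theta ->
           is_largest (is_eigN N G Lam theta) (- lam theta)) :
  (exists C delta, 0 < delta /\ forall theta, 0 < theta < delta ->
     Rabs (mu theta - (2 * Lam js + 2 * theta * sumG N G js
                       - 4 * theta ^ 2 * sumH N G Lam js)) <= C * theta ^ 3)
  /\
  (exists C delta, 0 < delta /\ forall theta, 0 < theta < delta ->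
     forall W, is_eigvecT N (opT N G Lam theta) (- mu theta) W ->
       normT N W = 1 -> 0 < W js js ->
       normT N (fun j l => W j l - W0 js j l - theta * W1 G Lam js j l)
         <= C * theta ^ 2)
  /\
  (exists C delta, 0 < delta /\ forall theta, 0 < theta < delta ->
     Rabs (mu theta - 2 * lam theta - (- 2 * theta ^ 2 * sumH N G Lam js))
       <= C * theta ^ 3)
  /\
  (exists delta, 0 < delta /\ forall theta, 0 < theta < delta ->
     mu theta - 2 * lam theta < 0).
Proof.
  destruct HG as [HGs [HGnn HGdiag]].
  assert (HGd := HGdiag js Hjs).
  set (gm := sumN N (fun j => sumN N (fun l => Rabs (G j l)))).
  assert (Hgm : forall j l, (j < N)%nat -> (l < N)%nat -> Rabs (G j l) <= gm).
  { intros j l Hj Hl. unfold gm.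
    eapply Rle_trans; [|apply (sumN_ge_term N (fun j => sumN N (fun l => Rabs (G j l))) j); auto].
    - apply (sumN_ge_term N (fun l => Rabs (G j l)) l); auto. intros; apply Rabs_pos.
    - intros k _. apply sumN_nonneg. intros; apply Rabs_pos. }
  destruct (gap_exists N Lam js Hmin) as [g [Hg Hgap]].
  assert (hB : 0 < Bc N gm) by (apply (B_pos N G Lam js g gm Hjs Hg Hgap Hgm HGs HGd)).
  set (d0 := Rmin 1 (g / (4 * Bc N gm))).
  assert (hd0 : 0 < d0) by (apply Rmin_pos; [lra|apply Rdiv_lt_0_compat; lra]).
  assert (hth : forall θ, 0 < θ < d0 -> θ <= 1 /\ θ * Bc N gm <= g / 4).
  { intros θ [h1 h2]. assert (e1 := Rmin_l 1 (g / (4 * Bc N gm))).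
    assert (e2 := Rmin_r 1 (g / (4 * Bc N gm))). fold d0 in e1, e2. split; [lra|].
    assert (θ <= g / (4 * Bc N gm)) by lra.
    apply Rmult_le_compat_r with (r := Bc N gm) in H; [|lra].
    replace (g / (4 * Bc N gm) * Bc N gm) with (g / 4) in H by (field; lra). lra. }
  assert (hA3 : 0 <= Ka3 N gm g).
  { unfold Ka3. assert (h := gm_nonneg N G Lam js g gm Hjs Hg Hgap Hgm HGs HGd).
    assert (h2 := a2_nonneg N G Lam js g gm Hjs Hg Hgap Hgm HGs HGd). assert (hN := pos_INR N).
    unfold Ka2, Ka1. apply Rmult_le_pos; [nra|auto]. }
  assert (P1 : forall θ, 0 < θ < d0 ->
     Rabs (mu θ - (2 * Lam js + 2 * θ * sumG N G js - 4 * θ ^ 2 * sumH N G Lam js)) <= Ka3 N gm g * θ ^ 3).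
  { intros θ hθ. destruct (hth θ hθ) as [_ h2].
    apply (mu_bound N G Lam js g gm Hjs Hg Hgap Hgm HGs HGd Hgen mu lam Hmu Hlam θ); tauto. }
  assert (P3 : forall θ, 0 < θ < d0 ->
     Rabs (mu θ - 2 * lam θ - (- 2 * θ ^ 2 * sumH N G Lam js)) <= 3 * Ka3 N gm g * θ ^ 3).
  { intros θ hθ. destruct (hth θ hθ) as [_ h2].
    assert (h1 := P1 θ hθ).
    assert (h3 := lam_bound N G Lam js g gm Hjs Hg Hgap Hgm HGs HGd Hgen mu lam Hmu Hlam θ (proj1 hθ) h2).
    replace (mu θ - 2 * lam θ - (- 2 * θ ^ 2 * sumH N G Lam js)) with
      ((mu θ - (2 * Lam js + 2 * θ * sumG N G js - 4 * θ ^ 2 * sumH N G Lam js))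
       + (-2) * (lam θ - (Lam js + θ * sumG N G js - θ ^ 2 * sumH N G Lam js))) by ring.
    eapply Rle_trans; [apply Rabs_triang|]. rewrite Rabs_mult, (Rabs_left (-2)) by lra. lra. }
  split; [|split; [|split]].
  - exists (Ka3 N gm g), d0. split; auto.
  - exists (INR N * C2 N g gm), d0. split; auto. intros θ hθ W HW Hn Hp.
    destruct (hth θ hθ) as [h1 h2].
    apply (W_bound N G Lam js g gm Hjs Hg Hgap Hgm HGs HGd Hgen mu lam Hmu Hlam θ W); auto; lra.
  - exists (3 * Ka3 N gm g), d0. split; auto.
  - assert (hs := sumH_pos N G Lam js HN Hjs Hmin HGs Hirr).
    set (d4 := Rmin d0 (2 * sumH N G Lam js / (3 * Ka3 N gm g + 1))).
    exists d4. split.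
    + apply Rmin_pos; auto. apply Rdiv_lt_0_compat; lra.
    + intros θ [h1 h2].
      assert (e1 := Rmin_l d0 (2 * sumH N G Lam js / (3 * Ka3 N gm g + 1))).
      assert (e2 := Rmin_r d0 (2 * sumH N G Lam js / (3 * Ka3 N gm g + 1))). fold d4 in e1, e2.
      assert (h := P3 θ ltac:(lra)).
      assert (hq : θ * (3 * Ka3 N gm g + 1) < 2 * sumH N G Lam js).
      { assert (θ < 2 * sumH N G Lam js / (3 * Ka3 N gm g + 1)) by lra.
        apply Rmult_lt_compat_r with (r := 3 * Ka3 N gm g + 1) in H; [|lra].
        replace (2 * sumH N G Lam js / (3 * Ka3 N gm g + 1) * (3 * Ka3 N gm g + 1))
          with (2 * sumH N G Lam js) in H by (field; lra). lra. }
      assert (ht2 : 0 < θ ^ 2) by (apply pow_lt; lra).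
      assert (hk : 3 * Ka3 N gm g * θ ^ 3 < 2 * θ ^ 2 * sumH N G Lam js).
      { replace (3 * Ka3 N gm g * θ ^ 3) with (θ ^ 2 * (θ * (3 * Ka3 N gm g))) by ring.
        replace (2 * θ ^ 2 * sumH N G Lam js) with (θ ^ 2 * (2 * sumH N G Lam js)) by ring.
        apply Rmult_lt_compat_l; auto. nra. }
      assert (hh := abs_le_inv _ _ h). lra.
Qed.

From mathcomp Require all_boot all_order all_algebra Rstruct polyrcf ring lra.
Module MC.
Import all_boot all_order all_algebra Rstruct polyrcf ring lra.
Import GRing.Theory Num.Theory Order.TTheory.
Local Open Scope ring_scope.

Lemma sumN_big (K : nat) (f : nat -> R) : sumN K f = \sum_(i < K) f i.
Proof.
elim: K => [|K IH]; first by rewrite big_ord0.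
by rewrite big_ord_recr /= IH.
Qed.

Lemma prodN_big (K : nat) (f : nat -> R) : prodN K f = \prod_(i < K) f i.
Proof.
elim: K => [|K IH]; first by rewrite big_ord0.
by rewrite big_ord_recr /= IH.
Qed.

Section Gen.
Variables (K : nat) (d : nat -> R) (E : nat -> nat -> R).

Definition Mt (t nu : R) : 'M[R]_K :=
  \matrix_(i, j) ((i == j)%:R * (nu - d i) - t * E i j).

Lemma kernel_of_det0 t nu : \det (Mt t nu) = 0 ->
  exists v : nat -> R, (exists k, (k < K)%N /\ v k <> 0) /\
  forall k, (k < K)%N -> nu * v k - d k * v k - t * sumN K (fun k' => E k k' * v k') = 0.
Proof.
rewrite -det_tr => /eqP/det0P [w wn0 hw].
pose v := fun k : nat => if (insub k : option 'I_K) is Some i then w 0 i else 0.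
have vE : forall i : 'I_K, v i = w 0 i by move=> i; rewrite /v valK.
exists v; split.
  apply: NNPP => hn; apply/negP: wn0; apply/negPn/eqP/rowP => i.
  rewrite mxE; rewrite -vE; apply: NNPP => hi; apply: hn; exists i; split => //.
move=> k hk; pose i := Ordinal hk.
have h := congr1 (fun M : 'M[R]_(1,K) => M 0 i) hw; rewrite /= in h. rewrite mxE in h.
rewrite (_ : (0 : 'M[R]_(1,K)) 0 i = 0) in h; last by rewrite mxE.
rewrite sumN_big.
have -> : \sum_(k' < K) E k k' * v k' = \sum_(j < K) E i j * w 0 j.
  by apply: eq_bigr => j _; rewrite vE.
rewrite -[in RHS]h.
rewrite [X in _ = X](eq_bigr (fun j => w 0 j * Mt t nu i j)); last by move=> j _; rewrite mxE.
under [X in _ = X]eq_bigr => j _ do rewrite /Mt mxE mulrBr.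
have e1 : \sum_(j < K) w 0 j * ((i == j)%:R * (nu - d i)) = w 0 i * (nu - d i).
  rewrite (bigD1 i) //= eqxx mul1r big1 ?addr0 // => j /negbTE.
  by rewrite eq_sym => ->; rewrite mul0r mulr0.
rewrite sumrB e1 -vE /= mulr_sumr.
rewrite [X in _ = _ - X](eq_bigr (fun j : 'I_K => t * (E i j * w 0 j))); last first.
  by move=> j _; ring.
rewrite /=; lra.
Qed.

Definition Pn (nu : R) : {poly R} :=
  \det (\matrix_(i < K, j < K) (((i == j)%:R * (nu - d i))%:P - 'X * (E i j)%:P)).

Lemma PnE nu t : (Pn nu).[t] = \det (Mt t nu).
Proof.
rewrite /Pn -horner_evalE -det_map_mx; congr (\det _); apply/matrixP=> i j.
by rewrite !mxE /= horner_evalE !hornerE.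
Qed.

Definition Qt (t : R) : {poly R} :=
  \det (\matrix_(i < K, j < K) ((i == j)%:R *: ('X - (d i)%:P) - (t * E i j)%:P)).

Lemma QtE t nu : (Qt t).[nu] = \det (Mt t nu).
Proof.
rewrite /Qt -horner_evalE -det_map_mx; congr (\det _); apply/matrixP=> i j.
by rewrite !mxE /= horner_evalE !hornerE.
Qed.

Lemma Mt0 nu : \det (Mt 0 nu) = \prod_(i < K) (nu - d i).
Proof.
have -> : Mt 0 nu = diag_mx (\row_i (nu - d i)).
  apply/matrixP => i j; rewrite !mxE mul0r subr0.
  by case: eqP => [->|_]; rewrite ?mul1r ?mulr1n ?mul0r ?mulr0n.
by rewrite det_diag; apply: eq_bigr => i _; rewrite mxE.
Qed.

End Gen.

Lemma gen : GenStmt.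
Proof.
move=> K d E lo hi th /RleP hlohi /RleP hth Hker /RltP Hprod.
have Hnz : forall t nu, 0 <= t <= th -> (nu = lo \/ nu = hi) -> \det (Mt K d E t nu) != 0.
  move=> t nu /andP [/RleP h1 /RleP h2] hnu; apply/eqP => /kernel_of_det0 [v [[k [hk hv]] hv2]].
  apply: hv; apply: (Hker t nu v).
  + by split.
  + exact: hnu.
  + by move=> k' /ssrnat.ltP hk'; apply: hv2.
  + by apply/ssrnat.ltP.
have sgn : forall nu, (nu = lo \/ nu = hi) -> 0 < (Pn K d E nu).[0] * (Pn K d E nu).[th].
  move=> nu hnu; rewrite ltNge; apply/negP => hle.
  have [x hx rx] := polyrcf.poly_ivt hth hle.
  move: hx; rewrite in_itv /= => hx.
  by move: (Hnz x nu hx hnu); rewrite -PnE (rootP rx) eqxx.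
have s1 := sgn lo (or_introl erefl).
have s2 := sgn hi (or_intror erefl).
have e0 : forall nu, (Pn K d E nu).[0] = prodN K (fun k => nu - d k).
  by move=> nu; rewrite PnE Mt0 prodN_big.
rewrite !e0 !PnE -!QtE in s1 s2.
have Hp : prodN K (fun k => lo - d k) * prodN K (fun k => hi - d k) < 0 := Hprod.
have hq : (Qt K d E th).[lo] * (Qt K d E th).[hi] <= 0 by nra.
have [nu hnu rnu] := polyrcf.poly_ivt hlohi hq.
move: hnu; rewrite in_itv /= => /andP [/RleP h1 /RleP h2].
exists nu; split; first by split.
have /kernel_of_det0 [v [[k [hk hv]] hv2]] : \det (Mt K d E th nu) = 0 by rewrite -QtE (rootP rnu).
exists v; split; first by exists k; split => //; apply/ssrnat.ltP.
by move=> k' /ssrnat.ltP hk'; apply: hv2.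
Qed.

End MC.

Theorem mainTheorem10 (N : nat) (HN : (2 <= N)%nat)
  (Lam : nat -> R) (G : nat -> nat -> R) (js : nat)
  (HLam : forall j, (j < N)%nat -> 0 <= Lam j)
  (Hjs : (js < N)%nat)
  (Hmin : forall j, (j < N)%nat -> j <> js -> Lam js < Lam j)
  (HG : gamma_ok N G) (Hirr : irreducible N G)
  (mu lam : R -> R)
  (Hmu : forall theta, 0 < theta ->
           is_largest (is_eigT N (opT N G Lam theta)) (- mu theta))
  (Hlam : forall theta, 0 < theta ->
           is_largest (is_eigN N G Lam theta) (- lam theta)) :
  (exists C delta, 0 < delta /\ forall theta, 0 < theta < delta ->
     Rabs (mu theta - (2 * Lam js + 2 * theta * sumG N G js
                       - 4 * theta ^ 2 * sumH N G Lam js)) <= C * theta ^ 3)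
  /\
  (exists C delta, 0 < delta /\ forall theta, 0 < theta < delta ->
     forall W, is_eigvecT N (opT N G Lam theta) (- mu theta) W ->
       normT N W = 1 -> 0 < W js js ->
       normT N (fun j l => W j l - W0 js j l - theta * W1 G Lam js j l)
         <= C * theta ^ 2)
  /\
  (exists C delta, 0 < delta /\ forall theta, 0 < theta < delta ->
     Rabs (mu theta - 2 * lam theta - (- 2 * theta ^ 2 * sumH N G Lam js))
       <= C * theta ^ 3)
  /\
  (exists delta, 0 < delta /\ forall theta, 0 < theta < delta ->
     mu theta - 2 * lam theta < 0).
Proof.
  exact (main_aux MC.gen N HN Lam G js HLam Hjs Hmin HG Hirr mu lam Hmu Hlam).
Qed.
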